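(* Assume $0<\zeta_3<\zeta_2<\zeta_1$ and let $$\phi(x)=\frac{2(\zeta_1+\zeta_3)(\zeta_2+\zeta_3)}{(\zeta_1+\zeta_3)-(\zeta_1-\zeta_2)\mathrm{sn}^2(\nu x,k)}-\zeta_1-\zeta_2-\zeta_3,\quad \nu=\sqrt{\zeta_1^2-\zeta_3^2},\ k=\sqrt{\frac{\zeta_1^2-\zeta_2^2}{\zeta_1^2-\zeta_3^2}},$$ viewed as a meromorphic function of $z=\nu x\in\mathbb{C}$. Counting with multiplicity and modulo the periods $2K$, $2iK'$, there exist exactly two simple poles of $\phi$ in $[-K,K]\times[-iK',iK']$, at $\pm(iK'+\alpha)$ with $\alpha\in(0,K)$ given by $$\mathrm{sn}(\alpha,k)=\sqrt{\frac{\zeta_1-\zeta_3}{\zeta_1+\zeta_2}},$$ and two simple zeros of $\phi$ in $[-K,K]\times[-iK',iK']$ at $\pm\beta$, where: $\beta\in(0,K)$ is real for $\zeta_1>\zeta_2+\zeta_3$ and given by $$\mathrm{sn}(\beta,k)=\sqrt{\frac{(\zeta_1+\zeta_3)(\zeta_1-\zeta_2-\zeta_3)}{(\zeta_1-\zeta_2)(\zeta_1+\zeta_2+\zeta_3)}};$$ $\beta\in i(0,K')$ is purely imaginary for $\zeta_1<\zeta_2+\zeta_3$ and given by $$\mathrm{sn}(-i\beta,k')=\sqrt{\frac{(\zeta_1+\zeta_3)(\zeta_2+\zeta_3-\zeta_1)}{(\zeta_2+\zeta_3)(\zeta_1-\zeta_2+\zeta_3)}};$$ and $\beta=0$ for $\zeta_1=\zeta_2+\zeta_3$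 (in which case there is only one double zero).
   Context: $K=K(k)$ is the complete elliptic integral of the first kind, $k'=\sqrt{1-k^2}$, $K'=K(k')$, and $\mathrm{sn}(\cdot,k)$ is the Jacobi elliptic sine with modulus $k$. $[-K,K]\times[-iK',iK']$ denotes the rectangle $\{a+ib: a\in[-K,K], b\in[-K',K']\}$. *)

(* Defs.v *)
From Stdlib Require Import Reals ClassicalEpsilon ZArith.
From Coquelicot Require Import Coquelicot.
Open Scope R_scope.

Definition ellF (phi k : R) : R :=
  RInt (fun t => / sqrt (1 - k ^ 2 * sin t ^ 2)) 0 phi.

Definition ellK (k : R) : R := ellF (PI / 2) k.

Definition cmod (k : R) : R := sqrt (1 - k ^ 2).

(** Jacobi amplitude: the inverse function of phi |-> F(phi,k)
    (a strictly increasing bijection R -> R for 0 <= k < 1). *)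
Definition am (u k : R) : R :=
  epsilon (inhabits 0) (fun phi => ellF phi k = u).

Definition sn (u k : R) : R := sin (am u k).
Definition cn (u k : R) : R := cos (am u k).
Definition dn (u k : R) : R := sqrt (1 - k ^ 2 * sn u k ^ 2).

(** Jacobi sn at a complex argument x + i y, via the addition theorem and
    Jacobi's imaginary transformation (the standard formula):
    sn(x+iy,k) = (s d1 + i c d s1 c1) / (c1^2 + k^2 s^2 s1^2),
    s,c,d = sn,cn,dn(x,k);  s1,c1,d1 = sn,cn,dn(y,k').
    (At the poles of sn the denominator vanishes and the value is junk;
     all statements below only look at limits in punctured neighbourhoods.) *)
Definition snC (z : C) (k : R) : C :=
  let x := Re z in let y := Im z in let k' := cmod k in
  let s := sn x k in let c := cn x k in let d := dn x k in
  let s1 := sn y k' in let c1 := cn y k' in let d1 := dn y k' in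
  Cdiv (s * d1, c * d * s1 * c1) (RtoC (c1 ^ 2 + k ^ 2 * s ^ 2 * s1 ^ 2)).

Fixpoint Cpow_nat (z : C) (n : nat) : C :=
  match n with O => RtoC 1 | S n => Cmult z (Cpow_nat z n) end.
Definition Cpow_Z (z : C) (m : Z) : C :=
  match m with
  | Z0 => RtoC 1
  | Zpos p => Cpow_nat z (Pos.to_nat p)
  | Zneg p => Cinv (Cpow_nat z (Pos.to_nat p))
  end.

(** f has order m at z0 (m > 0: zero of multiplicity m, m < 0: pole of
    order -m, m = 0: finite nonzero limit), i.e. (z - z0)^(-m) f(z) tends
    to a finite nonzero limit as z -> z0, z <> z0. *)
Definition order_at (f : C -> C) (z0 : C) (m : Z) : Prop :=
  exists L : C, L <> RtoC 0 /\
    filterlim (fun z => Cmult (Cpow_Z (Cminus z z0) (- m)) (f z))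
              (locally' z0) (locally L).

Definition lat_eq (K K' : R) (z w : C) : Prop :=
  exists m n : Z, Cminus z w = (2 * IZR m * K, 2 * IZR n * K').

Definition in_rect (K K' : R) (z : C) : Prop :=
  -K <= Re z <= K /\ -K' <= Im z <= K'.

(* Main.v *)
Require Import Defs.
From Stdlib Require Import Reals ZArith Lra Psatz ClassicalEpsilon.
From Stdlib Require Import Reals ZArith.
From Coquelicot Require Import Coquelicot.
Open Scope R_scope.

Definition gi (m t : R) : R := / sqrt (1 - m ^ 2 * sin t ^ 2).

Lemma rad_ge (m t : R) : m ^ 2 < 1 -> 1 - m ^ 2 <= 1 - m ^ 2 * sin t ^ 2.
Proof.
  intros Hm. assert (0 <= sin t ^ 2 <= 1).
  { pose proof (sin2 t). pose proof (cos2 t). unfold Rsqr in *. split; nra. }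
  assert (0 <= m ^ 2) by nra. nra.
Qed.

Lemma rad_pos (m t : R) : m ^ 2 < 1 -> 0 < 1 - m ^ 2 * sin t ^ 2.
Proof. intros Hm. pose proof (rad_ge m t Hm). lra. Qed.

Lemma gi_ge1 (m t : R) : m ^ 2 < 1 -> 1 <= gi m t.
Proof.
  intros Hm. unfold gi. pose proof (rad_pos m t Hm).
  assert (1 - m ^ 2 * sin t ^ 2 <= 1).
  { assert (0 <= m^2 * sin t ^2) by (apply Rmult_le_pos; apply pow2_ge_0). lra. }
  assert (0 < sqrt (1 - m ^ 2 * sin t ^ 2)) by (apply sqrt_lt_R0; lra).
  assert (sqrt (1 - m ^ 2 * sin t ^ 2) <= 1).
  { apply Rle_trans with (sqrt 1); [apply sqrt_le_1_alt; lra | rewrite sqrt_1; lra]. }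
  apply Rle_trans with (/1); [rewrite Rinv_1; lra| apply Rinv_le_contravar; lra].
Qed.

Lemma gi_even (m t : R) : gi m (- t) = gi m t.
Proof. unfold gi. rewrite sin_neg. f_equal. f_equal. ring. Qed.

Lemma gi_derive (m t : R) : m ^ 2 < 1 -> ex_derive (gi m) t.
Proof.
  intros Hm. pose proof (rad_pos m t Hm). unfold gi. auto_derive.
  split; [ring_simplify; ring_simplify in H; lra|].
  split; auto. apply Rgt_not_eq. apply sqrt_lt_R0. ring_simplify; ring_simplify in H; lra.
Qed.

Lemma gi_cont (m t : R) : m ^ 2 < 1 -> continuous (gi m) t.
Proof. intros Hm. apply (ex_derive_continuous (K := R_AbsRing) (V := R_NormedModule)). now apply gi_derive. Qed.

Lemma gi_exRInt (m a b : R) : m ^ 2 < 1 -> ex_RInt (gi m) a b.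
Proof. intros Hm. apply (ex_RInt_continuous (V := R_CompleteNormedModule)). intros; now apply gi_cont. Qed.

Lemma ellF_eq (p m : R) : ellF p m = RInt (gi m) 0 p.
Proof. reflexivity. Qed.

Lemma ellF_derive (p m : R) : m ^ 2 < 1 -> is_derive (fun q => ellF q m) p (gi m p).
Proof.
  intros Hm. unfold ellF. fold (gi m).
  apply (is_derive_RInt (gi m) (fun b => RInt (gi m) 0 b) 0 p).
  - apply filter_forall. intros b. apply (RInt_correct (V := R_CompleteNormedModule)). now apply gi_exRInt.
  - now apply gi_cont.
Qed.

Lemma ellF_diff (a b m : R) : m ^ 2 < 1 -> a <= b -> b - a <= ellF b m - ellF a m.
Proof.
  intros Hm Hab. rewrite !ellF_eq.
  assert (E : RInt (gi m) 0 b - RInt (gi m) 0 a = RInt (gi m) a b).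
  { rewrite <- (RInt_Chasles (gi m) 0 a b) by (apply gi_exRInt; auto).
    unfold plus; simpl. ring. }
  rewrite E.
  assert (RInt (fun _ => 1) a b <= RInt (gi m) a b).
  { apply RInt_le; auto. apply ex_RInt_const. apply gi_exRInt; auto.
    intros; apply gi_ge1; auto. }
  rewrite RInt_const in H. unfold scal in H; simpl in H. unfold mult in H; simpl in H. lra.
Qed.

Lemma ellF_0 (m : R) : ellF 0 m = 0.
Proof. unfold ellF. apply (RInt_point (V := R_CompleteNormedModule)). Qed.

Lemma ellF_odd (p m : R) : m ^ 2 < 1 -> ellF (- p) m = - ellF p m.
Proof.
  intros Hm. rewrite !ellF_eq.
  pose proof (RInt_comp_lin (V := R_CompleteNormedModule) (gi m) (-1) 0 0 p) as H.
  replace (-1 * 0 + 0) with 0 in H by ring.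
  replace (-1 * p + 0) with (- p) in H by ring.
  rewrite <- H by (apply gi_exRInt; auto).
  rewrite (RInt_ext (V := R_CompleteNormedModule) _ (fun y => opp (gi m y))).
  - rewrite (RInt_opp (V := R_CompleteNormedModule)) by (apply gi_exRInt; auto). reflexivity.
  - intros x _. unfold scal; simpl; unfold mult; simpl.
    replace (-1 * x + 0) with (- x) by ring. rewrite gi_even. unfold opp; simpl. ring.
Qed.

Lemma ellF_strict (a b m : R) : m ^ 2 < 1 -> a < b -> ellF a m < ellF b m.
Proof. intros. pose proof (ellF_diff a b m H (Rlt_le _ _ H0)). lra. Qed.

Lemma ellF_le (a b m : R) : m ^ 2 < 1 -> a <= b -> ellF a m <= ellF b m.
Proof. intros. pose proof (ellF_diff a b m H H0). lra. Qed.

Lemma ellF_inj (a b m : R) : m ^ 2 < 1 -> ellF a m = ellF b m -> a = b.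
Proof.
  intros Hm E. destruct (Rtotal_order a b) as [h|[h|h]]; auto.
  - pose proof (ellF_strict a b m Hm h); lra.
  - pose proof (ellF_strict b a m Hm h); lra.
Qed.

Lemma ellF_cont (m : R) : m ^ 2 < 1 -> continuity (fun q => ellF q m).
Proof.
  intros Hm x. apply continuity_pt_filterlim. apply (ex_derive_continuous (K := R_AbsRing) (V := R_NormedModule) (fun q => ellF q m)).
  eexists. apply ellF_derive; auto.
Qed.

Lemma ellF_surj (u m : R) : m ^ 2 < 1 -> exists p, ellF p m = u.
Proof.
  intros Hm. set (a := - Rabs u - 1). set (b := Rabs u + 1).
  assert (Ha : ellF a m < u).
  { pose proof (ellF_diff a 0 m Hm). rewrite ellF_0 in H.
    assert (a <= 0) by (unfold a; pose proof (Rabs_pos u); lra).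
    specialize (H H0). unfold a in *. pose proof (Rle_abs (-u)). rewrite Rabs_Ropp in H1. lra. }
  assert (Hb : u < ellF b m).
  { pose proof (ellF_diff 0 b m Hm). rewrite ellF_0 in H.
    assert (0 <= b) by (unfold b; pose proof (Rabs_pos u); lra).
    specialize (H H0). unfold b in *. pose proof (Rle_abs u). lra. }
  destruct (IVT (fun q => ellF q m - u) a b) as [z [_ Hz]].
  - intros x. apply continuity_pt_minus. apply ellF_cont; auto. apply continuity_pt_const. intros ? ?; auto.
  - unfold a, b; pose proof (Rabs_pos u); lra.
  - lra.
  - lra.
  - exists z. lra.
Qed.

Lemma ellF_am (u m : R) : m ^ 2 < 1 -> ellF (am u m) m = u.
Proof.
  intros Hm. unfold am. apply (epsilon_spec (inhabits 0) (fun phi => ellF phi m = u)).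
  now apply ellF_surj.
Qed.

Lemma am_ellF (p m : R) : m ^ 2 < 1 -> am (ellF p m) m = p.
Proof. intros Hm. apply (ellF_inj _ _ m Hm). now rewrite ellF_am. Qed.

Lemma am_lip (u v m : R) : m ^ 2 < 1 -> Rabs (am u m - am v m) <= Rabs (u - v).
Proof.
  intros Hm. destruct (Rle_dec (am u m) (am v m)) as [h|h].
  - pose proof (ellF_diff _ _ m Hm h). rewrite !ellF_am in H by auto.
    rewrite !Rabs_left1 by lra. lra.
  - assert (am v m <= am u m) by lra.
    pose proof (ellF_diff _ _ m Hm H). rewrite !ellF_am in H0 by auto.
    rewrite !Rabs_right by lra. lra.
Qed.

Lemma am_le (u v m : R) : m ^ 2 < 1 -> u <= v -> am u m <= am v m.
Proof.
  intros Hm h. destruct (Rle_dec (am u m) (am v m)) as [h'|h']; auto.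
  assert (am v m < am u m) by lra. pose proof (ellF_strict _ _ m Hm H).
  rewrite !ellF_am in H0 by auto. lra.
Qed.

Lemma am_0 (m : R) : m ^ 2 < 1 -> am 0 m = 0.
Proof. intros. pose proof (am_ellF 0 m H) as E. rewrite ellF_0 in E. exact E. Qed.

Lemma am_odd (u m : R) : m ^ 2 < 1 -> am (- u) m = - am u m.
Proof.
  intros Hm. apply (ellF_inj _ _ m Hm). rewrite ellF_odd, !ellF_am; auto.
Qed.

Lemma am_cont (u m : R) : m ^ 2 < 1 -> continuity_pt (fun v => am v m) u.
Proof.
  intros Hm eps Heps. exists eps. split; auto. intros x [_ Hx].
  simpl in *. unfold R_dist in *. eapply Rle_lt_trans. apply am_lip; auto. auto.
Qed.

Lemma am_deriv (u m : R) : m ^ 2 < 1 -> derivable_pt_lim (fun v => am v m) u (dn u m).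
Proof.
  intros Hm.
  assert (Hd : forall a, derivable_pt_lim (fun q => ellF q m) a (gi m a)).
  { intros a. apply is_derive_Reals. apply ellF_derive; auto. }
  set (Prf := fun (a : R) (_ : am (u - 1) m <= a <= am (u + 1) m) =>
         (exist (fun l => derivable_pt_lim (fun q => ellF q m) a l) (gi m a) (Hd a)) : derivable_pt (fun q => ellF q m) a).
  assert (Hi : am (u - 1) m <= am u m <= am (u + 1) m).
  { split; apply am_le; auto; lra. }
  pose proof (Ranalysis5.derivable_pt_lim_recip_interv (fun q => ellF q m) (fun v => am v m) (u - 1) (u + 1) u Prf
     (am_cont u m Hm) ltac:(lra) ltac:(lra) Hi) as H.
  assert (Hder : derive_pt (fun q => ellF q m) (am u m) (Prf (am u m) Hi) = gi m (am u m)).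
  { apply derive_pt_eq_0. apply Hd. }
  cbv beta in H. rewrite Hder in H.
  assert (E : 1 / gi m (am u m) = dn u m).
  { unfold gi, dn, sn. pose proof (rad_pos m (am u m) Hm).
    assert (0 < sqrt (1 - m ^ 2 * sin (am u m) ^ 2)) by (apply sqrt_lt_R0; auto).
    field. lra. }
  rewrite <- E. apply H.
  - intros x _. unfold comp, id. apply ellF_am; auto.
  - pose proof (gi_ge1 m (am u m) Hm). lra.
Qed.

Lemma sn_sq (u m : R) : sn u m ^ 2 + cn u m ^ 2 = 1.
Proof. unfold sn, cn. pose proof (sin2_cos2 (am u m)). unfold Rsqr in H. lra. Qed.

Lemma dn_pos (u m : R) : m ^ 2 < 1 -> 0 < dn u m.
Proof. intros Hm. unfold dn, sn. apply sqrt_lt_R0. apply rad_pos; auto. Qed.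

Lemma dn_sq (u m : R) : m ^ 2 < 1 -> dn u m ^ 2 = 1 - m ^ 2 * sn u m ^ 2.
Proof. intros Hm. unfold dn. rewrite <- Rsqr_pow2. rewrite Rsqr_sqrt. auto.
  unfold sn. pose proof (rad_pos m (am u m) Hm). lra. Qed.

Lemma sn_deriv (u m : R) : m ^ 2 < 1 -> derivable_pt_lim (fun v => sn v m) u (cn u m * dn u m).
Proof.
  intros Hm. unfold sn, cn.
  apply (derivable_pt_lim_comp (fun v => am v m) sin u (dn u m) (cos (am u m))).
  apply am_deriv; auto. apply derivable_pt_lim_sin.
Qed.

Lemma cn_deriv (u m : R) : m ^ 2 < 1 -> derivable_pt_lim (fun v => cn v m) u (- sn u m * dn u m).
Proof.
  intros Hm. unfold sn, cn.
  apply (derivable_pt_lim_comp (fun v => am v m) cos u (dn u m) (- sin (am u m))).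
  apply am_deriv; auto. apply derivable_pt_lim_cos.
Qed.

Lemma dn_deriv (u m : R) : m ^ 2 < 1 -> derivable_pt_lim (fun v => dn v m) u (- m ^ 2 * sn u m * cn u m).
Proof.
  intros Hm. unfold dn.
  pose proof (dn_pos u m Hm) as Hp. unfold dn in Hp.
  pose proof (rad_pos m (am u m) Hm) as Hr. fold (sn u m) in Hr.
  set (s := sn u m).
  assert (H1 : derivable_pt_lim (fun x => 1 - m ^ 2 * x ^ 2) s (- (m ^ 2 * (2 * s)))).
  { apply is_derive_Reals. auto_derive; auto. ring. }
  assert (H2 : derivable_pt_lim (fun v => 1 - m ^ 2 * sn v m ^ 2) u ((- (m ^ 2 * (2 * s))) * (cn u m * dn u m))).
  { apply (derivable_pt_lim_comp (fun v => sn v m) (fun x => 1 - m ^ 2 * x ^ 2)).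
    apply sn_deriv; auto. apply H1. }
  assert (H3 : derivable_pt_lim sqrt (1 - m ^ 2 * s ^ 2) (/ (2 * sqrt (1 - m ^ 2 * s ^ 2)))).
  { apply derivable_pt_lim_sqrt. auto. }
  pose proof (derivable_pt_lim_comp _ _ u _ _ H2 H3) as H4.
  unfold comp in H4. 
  replace (- m ^ 2 * s * cn u m) with
    (/ (2 * sqrt (1 - m ^ 2 * s ^ 2)) * ((- (m ^ 2 * (2 * s))) * (cn u m * dn u m))).
  exact H4. unfold dn. fold s. field. fold s in Hp. lra.
Qed.

Lemma PI_gt2 : 2 < PI.
Proof. pose proof PI2_1. lra. Qed.

Lemma am_K (m : R) : m ^ 2 < 1 -> am (ellK m) m = PI / 2.
Proof. intros. unfold ellK. apply am_ellF; auto. Qed.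

Lemma am_mK (m : R) : m ^ 2 < 1 -> am (- ellK m) m = - (PI / 2).
Proof. intros. rewrite am_odd, am_K; auto. Qed.

Lemma ellK_pos (m : R) : m ^ 2 < 1 -> 0 < ellK m.
Proof. intros. unfold ellK. rewrite <- (ellF_0 m). apply ellF_strict; auto. pose proof PI_RGT_0. lra. Qed.

Lemma am_rect (x m : R) : m ^ 2 < 1 -> - ellK m <= x <= ellK m -> - (PI/2) <= am x m <= PI / 2.
Proof.
  intros Hm [h1 h2]. rewrite <- (am_mK m) by auto. rewrite <- (am_K m) at 1 by auto. split; apply am_le; auto.
Qed.

Lemma rect_inv (x m : R) : m ^ 2 < 1 -> - ellK m <= x <= ellK m -> x = ellF (asin (sn x m)) m.
Proof.
  intros Hm Hx. unfold sn. rewrite asin_sin by (apply am_rect; auto). rewrite ellF_am; auto.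
Qed.

Lemma sn_0 (m : R) : m ^ 2 < 1 -> sn 0 m = 0.
Proof. intros. unfold sn. rewrite am_0, sin_0; auto. Qed.
Lemma cn_0 (m : R) : m ^ 2 < 1 -> cn 0 m = 1.
Proof. intros. unfold cn. rewrite am_0, cos_0; auto. Qed.
Lemma dn_0 (m : R) : m ^ 2 < 1 -> dn 0 m = 1.
Proof. intros. unfold dn. rewrite sn_0; auto. replace (1 - m^2 * 0^2) with 1 by ring. apply sqrt_1. Qed.

Lemma sn_K (m : R) : m ^ 2 < 1 -> sn (ellK m) m = 1.
Proof. intros. unfold sn. rewrite am_K, sin_PI2; auto. Qed.
Lemma cn_K (m : R) : m ^ 2 < 1 -> cn (ellK m) m = 0.
Proof. intros. unfold cn. rewrite am_K, cos_PI2; auto. Qed.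
Lemma sn_mK (m : R) : m ^ 2 < 1 -> sn (- ellK m) m = -1.
Proof. intros. unfold sn. rewrite am_mK, sin_neg, sin_PI2; auto. Qed.
Lemma cn_mK (m : R) : m ^ 2 < 1 -> cn (- ellK m) m = 0.
Proof. intros. unfold cn. rewrite am_mK, cos_neg, cos_PI2; auto. Qed.

Definition pt (v m : R) : R := ellF (asin v) m.

Lemma pt_am (v m : R) : m ^ 2 < 1 -> am (pt v m) m = asin v.
Proof. intros. unfold pt. apply am_ellF; auto. Qed.

Lemma pt_sn (v m : R) : m ^ 2 < 1 -> -1 <= v <= 1 -> sn (pt v m) m = v.
Proof. intros. unfold sn. rewrite pt_am by auto. apply sin_asin; auto. Qed.

Lemma pt_cn (v m : R) : m ^ 2 < 1 -> -1 < v < 1 -> 0 < cn (pt v m) m.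
Proof. intros. unfold cn. rewrite pt_am by auto. pose proof (asin_bound_lt v H0). apply cos_gt_0; lra. Qed.

Lemma pt_opp (v m : R) : m ^ 2 < 1 -> pt (- v) m = - pt v m.
Proof. intros. unfold pt. rewrite asin_opp. apply ellF_odd; auto. Qed.

Lemma asin_pos (v : R) : 0 < v <= 1 -> 0 < asin v.
Proof.
  intros Hv. pose proof (asin_bound v). destruct (Rle_dec (asin v) 0) as [h|h]; [|lra].
  exfalso. pose proof (sin_asin v ltac:(lra)).
  pose proof (sin_ge_0 (- asin v) ltac:(lra) ltac:(pose proof PI_RGT_0; lra)).
  rewrite sin_neg in H1. lra.
Qed.

Lemma pt_range (v m : R) : m ^ 2 < 1 -> 0 < v < 1 -> 0 < pt v m < ellK m.
Proof.
  intros Hm Hv. unfold pt, ellK. pose proof (asin_pos v ltac:(lra)). pose proof (asin_bound_lt v ltac:(lra)).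
  split.
  - rewrite <- (ellF_0 m). apply ellF_strict; auto.
  - apply ellF_strict; auto. lra.
Qed.

Lemma rect_sn (x v m : R) : m ^ 2 < 1 -> - ellK m <= x <= ellK m -> sn x m = v -> x = pt v m.
Proof. intros Hm Hx E. unfold pt. rewrite <- E. apply rect_inv; auto. Qed.

Lemma rect_sn_sq (x v m : R) : m ^ 2 < 1 -> - ellK m <= x <= ellK m -> sn x m ^ 2 = v ^ 2 ->
  x = pt v m \/ x = - pt v m.
Proof.
  intros Hm Hx E. assert (sn x m = v \/ sn x m = - v) as [h|h] by nra.
  - left. apply rect_sn; auto.
  - right. rewrite <- pt_opp by auto. apply rect_sn; auto.
Qed.

Lemma pt_0 (m : R) : m ^ 2 < 1 -> pt 0 m = 0.
Proof. intros. unfold pt. rewrite asin_0. apply ellF_0. Qed.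

Lemma pt_1 (m : R) : m ^ 2 < 1 -> pt 1 m = ellK m.
Proof. intros. unfold pt. rewrite asin_1. reflexivity. Qed.

Lemma sin_zero_small (t : R) : Rabs t < 2 -> sin t = 0 -> t = 0.
Proof.
  intros Ht E. pose proof PI_gt2.
  destruct (Rtotal_order t 0) as [h|[h|h]]; auto.
  - pose proof (sin_gt_0 (- t)). rewrite sin_neg in H0. rewrite Rabs_left in Ht by lra. lra.
  - pose proof (sin_gt_0 t). rewrite Rabs_right in Ht by lra. lra.
Qed.

Lemma sn_zero_near0 (x m : R) : m ^ 2 < 1 -> Rabs x < 2 -> sn x m = 0 -> x = 0.
Proof.
  intros Hm Hx E. unfold sn in E.
  pose proof (am_lip x 0 m Hm). rewrite am_0 in H by auto. rewrite !Rminus_0_r in H.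
  apply sin_zero_small in E; [|lra].
  rewrite <- (ellF_am x m Hm), E. apply ellF_0.
Qed.

Lemma cn_zero_nearK (y y0 m : R) : m ^ 2 < 1 -> (y0 = ellK m \/ y0 = - ellK m) ->
  Rabs (y - y0) < 2 -> cn y m = 0 -> y = y0.
Proof.
  intros Hm Hy0 Hy E. unfold cn in E.
  pose proof (am_lip y y0 m Hm).
  rewrite <- (ellF_am y m Hm).
  destruct Hy0 as [-> | ->].
  - rewrite am_K in H by auto. rewrite <- sin_shift in E.
    apply sin_zero_small in E. unfold ellK. f_equal. lra.
    rewrite <- Rabs_Ropp. replace (- (PI/2 - am y m)) with (am y m - PI/2) by ring. lra.
  - rewrite am_mK in H by auto. rewrite <- cos_neg, <- sin_shift in E.
    apply sin_zero_small in E. unfold ellK. replace (am y m) with (- (PI/2)) by lra.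
    apply ellF_odd; auto.
    replace (PI / 2 - - am y m) with (am y m - - (PI/2)) by ring. lra.
Qed.

Notation dpl := differentiable_pt_lim.

Lemma dpl_val (f : R -> R -> R) x y a b a' b' : dpl f x y a b -> a = a' -> b = b' -> dpl f x y a' b'.
Proof. intros H -> ->. exact H. Qed.

Lemma dpl_fst x y : dpl (fun u v => u) x y 1 0.
Proof.
  intros eps. exists eps. intros u v _ _.
  replace (u - x - (1 * (u - x) + 0 * (v - y))) with 0 by ring. rewrite Rabs_R0.
  apply Rmult_le_pos. left; apply cond_pos. apply Rle_trans with (Rabs (u - x)). apply Rabs_pos. apply Rmax_l.
Qed.

Lemma dpl_snd x y : dpl (fun u v => v) x y 0 1.
Proof.
  intros eps. exists eps. intros u v _ _.
  replace (v - y - (0 * (u - x) + 1 * (v - y))) with 0 by ring. rewrite Rabs_R0.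
  apply Rmult_le_pos. left; apply cond_pos. apply Rle_trans with (Rabs (u - x)). apply Rabs_pos. apply Rmax_l.
Qed.

Lemma dpl_const x y c : dpl (fun u v => c) x y 0 0.
Proof.
  intros eps. exists eps. intros u v _ _.
  replace (c - c - (0 * (u - x) + 0 * (v - y))) with 0 by ring. rewrite Rabs_R0.
  apply Rmult_le_pos. left; apply cond_pos. apply Rle_trans with (Rabs (u - x)). apply Rabs_pos. apply Rmax_l.
Qed.

Lemma dpl_mult0 a b : dpl (fun u v => u * v) a b b a.
Proof.
  intros eps. exists eps. intros u v Hu Hv.
  replace (u * v - a * b - (b * (u - a) + a * (v - b))) with ((u - a) * (v - b)) by ring.
  rewrite Rabs_mult.
  set (M := Rmax (Rabs (u - a)) (Rabs (v - b))).
  assert (Rabs (u - a) <= M) by apply Rmax_l.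
  assert (Rabs (v - b) <= M) by apply Rmax_r.
  assert (M < eps) by (unfold M; apply Rmax_lub_lt; auto).
  pose proof (Rabs_pos (u - a)). pose proof (Rabs_pos (v - b)).
  apply Rle_trans with (M * M). apply Rmult_le_compat; auto.
  rewrite (Rmult_comm eps). apply Rmult_le_compat_l. lra. lra.
Qed.

Lemma dpl_plus0 a b : dpl (fun u v => u + v) a b 1 1.
Proof.
  intros eps. exists eps. intros u v _ _.
  replace (u + v - (a + b) - (1 * (u - a) + 1 * (v - b))) with 0 by ring. rewrite Rabs_R0.
  apply Rmult_le_pos. left; apply cond_pos. apply Rle_trans with (Rabs (u - a)). apply Rabs_pos. apply Rmax_l.
Qed.

Lemma dpl_x (f : R -> R) x y l : derivable_pt_lim f x l -> dpl (fun u v => f u) x y l 0.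
Proof. apply differentiable_pt_lim_proj1_0. Qed.

Lemma dpl_y (f : R -> R) x y l : derivable_pt_lim f y l -> dpl (fun u v => f v) x y 0 l.
Proof.
  intros H.
  pose proof (differentiable_pt_lim_comp (fun a b => f a) (fun u v => v) (fun u v => u) x y l 0 0 1 1 0
    (dpl_x f y x l H) (dpl_snd x y) (dpl_fst x y)) as H2.
  simpl in H2. eapply dpl_val. exact H2. ring. ring.
Qed.

Lemma dpl_mult (f g : R -> R -> R) x y a b c d :
  dpl f x y a b -> dpl g x y c d ->
  dpl (fun u v => f u v * g u v) x y (a * g x y + f x y * c) (b * g x y + f x y * d).
Proof.
  intros Hf Hg.
  pose proof (differentiable_pt_lim_comp (fun u v => u * v) f g x y _ _ _ _ _ _ (dpl_mult0 (f x y) (g x y)) Hf Hg) as H.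
  eapply dpl_val. exact H. ring. ring.
Qed.

Lemma dpl_plus (f g : R -> R -> R) x y a b c d :
  dpl f x y a b -> dpl g x y c d ->
  dpl (fun u v => f u v + g u v) x y (a + c) (b + d).
Proof.
  intros Hf Hg.
  pose proof (differentiable_pt_lim_comp (fun u v => u + v) f g x y _ _ _ _ _ _ (dpl_plus0 (f x y) (g x y)) Hf Hg) as H.
  eapply dpl_val. exact H. ring. ring.
Qed.

Lemma dpl_comp1 (h : R -> R) (f : R -> R -> R) x y a b l :
  dpl f x y a b -> derivable_pt_lim h (f x y) l ->
  dpl (fun u v => h (f u v)) x y (l * a) (l * b).
Proof.
  intros Hf Hh.
  pose proof (differentiable_pt_lim_comp (fun u v => h u) f f x y _ _ _ _ _ _ (dpl_x h (f x y) (f x y) l Hh) Hf Hf) as H.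
  eapply dpl_val. exact H. ring. ring.
Qed.

Lemma dpl_inv (f : R -> R -> R) x y a b :
  dpl f x y a b -> f x y <> 0 ->
  dpl (fun u v => / f u v) x y (- a / (f x y) ^ 2) (- b / (f x y) ^ 2).
Proof.
  intros Hf Hn.
  assert (Hd : derivable_pt_lim Rinv (f x y) (- / (f x y) ^ 2)).
  { apply is_derive_Reals. auto_derive; auto. field; auto. }
  pose proof (dpl_comp1 Rinv f x y a b _ Hf Hd) as H.
  eapply dpl_val. exact H. field; auto. field; auto.
Qed.

Lemma dpl_cont (f : R -> R -> R) x y a b : dpl f x y a b -> continuity_2d_pt f x y.
Proof. intros H. apply differentiable_continuity_pt. exists a, b. exact H. Qed.

Lemma dpl_ext_all (f g : R -> R -> R) x y a b : (forall u v, f u v = g u v) -> dpl f x y a b -> dpl g x y a b.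
Proof. intros E H. apply (differentiable_pt_lim_ext f g). exists (mkposreal 1 Rlt_0_1). intros; apply E. exact H. Qed.

Lemma Cdiv_real (P Q D : R) : D <> 0 -> Cdiv (P, Q) (RtoC D) = (P * / D, Q * / D).
Proof. intros HD. unfold Cdiv, Cmult, Cinv, RtoC. simpl. f_equal; field; auto. Qed.

Lemma sq_zero (x : R) : x ^ 2 = 0 -> x = 0.
Proof. intros H. destruct (Req_dec x 0); auto. exfalso. apply (pow_nonzero x 2) in H0. auto. Qed.

Section SNC.
Variable k : R.
Hypothesis Hk : 0 < k < 1.

Definition kp := cmod k.

Lemma k2 : k ^ 2 < 1.
Proof. nra. Qed.

Lemma kp_sq : kp ^ 2 = 1 - k ^ 2.
Proof. unfold kp, cmod. rewrite <- Rsqr_pow2, Rsqr_sqrt. auto. nra. Qed.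

Lemma kp_pos : 0 < kp.
Proof. unfold kp, cmod. apply sqrt_lt_R0. nra. Qed.

Lemma kp2 : kp ^ 2 < 1.
Proof. rewrite kp_sq. nra. Qed.

Definition Dd x y := cn y kp ^ 2 + k ^ 2 * sn x k ^ 2 * sn y kp ^ 2.
Definition Pf x y := sn x k * dn y kp.
Definition Qf x y := cn x k * dn x k * sn y kp * cn y kp.
Definition Uf x y := Pf x y * / Dd x y.
Definition Vf x y := Qf x y * / Dd x y.

Lemma snC_eq x y : Dd x y <> 0 -> snC (x, y) k = (Uf x y, Vf x y).
Proof.
  intros HD. unfold snC, Uf, Vf, Pf, Qf. fold kp. unfold Dd in HD. simpl.
  apply Cdiv_real. auto.
Qed.

Lemma Dd_ge x y : 0 <= Dd x y.
Proof. unfold Dd. pose proof (pow2_ge_0 (cn y kp)). pose proof (pow2_ge_0 (k * sn x k * sn y kp)).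
  replace (k ^ 2 * sn x k ^ 2 * sn y kp ^ 2) with ((k * sn x k * sn y kp) ^ 2) by ring. lra. Qed.

Lemma Dd_zero x y : Dd x y = 0 -> cn y kp = 0 /\ sn x k = 0.
Proof.
  unfold Dd. intros E.
  pose proof (pow2_ge_0 (cn y kp)). pose proof (pow2_ge_0 (k * sn x k * sn y kp)).
  replace (k ^ 2 * sn x k ^ 2 * sn y kp ^ 2) with ((k * sn x k * sn y kp) ^ 2) in E by ring.
  assert (cn y kp ^ 2 = 0) by lra. assert ((k * sn x k * sn y kp) ^ 2 = 0) by lra.
  apply sq_zero in H1. apply sq_zero in H2.
  split; auto. pose proof (sn_sq y kp). rewrite H1 in H3.
  assert (sn y kp <> 0) by (intro h; rewrite h in H3; lra).
  destruct (Rmult_integral _ _ H2) as [h|h]; [|tauto].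
  destruct (Rmult_integral _ _ h) as [h'|h']; auto. lra.
Qed.

Section Pt.
Variables x0 y0 : R.
Let s := sn x0 k. Let c := cn x0 k. Let d := dn x0 k.
Let s1 := sn y0 kp. Let c1 := cn y0 kp. Let d1 := dn y0 kp.

Lemma dpl_s : dpl (fun u v => sn u k) x0 y0 (c * d) 0.
Proof. apply dpl_x. apply sn_deriv. apply k2. Qed.
Lemma dpl_c : dpl (fun u v => cn u k) x0 y0 (- s * d) 0.
Proof. apply dpl_x. apply cn_deriv. apply k2. Qed.
Lemma dpl_d : dpl (fun u v => dn u k) x0 y0 (- k ^ 2 * s * c) 0.
Proof. apply dpl_x. apply dn_deriv. apply k2. Qed.
Lemma dpl_s1 : dpl (fun u v => sn v kp) x0 y0 0 (c1 * d1).
Proof. apply dpl_y. apply sn_deriv. apply kp2. Qed.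
Lemma dpl_c1 : dpl (fun u v => cn v kp) x0 y0 0 (- s1 * d1).
Proof. apply dpl_y. apply cn_deriv. apply kp2. Qed.
Lemma dpl_d1 : dpl (fun u v => dn v kp) x0 y0 0 (- kp ^ 2 * s1 * c1).
Proof. apply dpl_y. apply dn_deriv. apply kp2. Qed.

Definition DDx := 2 * k * k * s * (c * d) * s1 * s1.
Definition DDy := 2 * c1 * (- s1 * d1) + 2 * k * k * s * s * s1 * (c1 * d1).
Definition PPx := c * d * d1.
Definition PPy := s * (- kp * kp * s1 * c1).
Definition QQx := ((- s * d) * d + c * (- k * k * s * c)) * s1 * c1.
Definition QQy := c * d * (c1 * d1 * c1 + s1 * (- s1 * d1)).

Lemma dpl_D : dpl Dd x0 y0 DDx DDy.
Proof.
  pose proof (dpl_mult _ _ _ _ _ _ _ _ dpl_c1 dpl_c1) as H1.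
  pose proof (dpl_mult _ _ _ _ _ _ _ _ dpl_s dpl_s) as H2.
  pose proof (dpl_mult _ _ _ _ _ _ _ _ dpl_s1 dpl_s1) as H3.
  pose proof (dpl_mult _ _ _ _ _ _ _ _ (dpl_const x0 y0 (k * k)) H2) as H4.
  pose proof (dpl_mult _ _ _ _ _ _ _ _ H4 H3) as H5.
  pose proof (dpl_plus _ _ _ _ _ _ _ _ H1 H5) as H6.
  eapply dpl_ext_all; [|eapply dpl_val; [exact H6| |]].
  - intros u v. unfold Dd. simpl. ring.
  - unfold DDx. simpl. fold s c d s1 c1 d1. ring.
  - unfold DDy. simpl. fold s c d s1 c1 d1. ring.
Qed.

Lemma dpl_P : dpl Pf x0 y0 PPx PPy.
Proof.
  pose proof (dpl_mult _ _ _ _ _ _ _ _ dpl_s dpl_d1) as H.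
  eapply dpl_ext_all; [|eapply dpl_val; [exact H| |]].
  - intros u v. reflexivity.
  - unfold PPx. simpl. fold s c d s1 c1 d1. ring.
  - unfold PPy. simpl. fold s c d s1 c1 d1. ring.
Qed.

Lemma dpl_Q : dpl Qf x0 y0 QQx QQy.
Proof.
  pose proof (dpl_mult _ _ _ _ _ _ _ _ dpl_c dpl_d) as H1.
  pose proof (dpl_mult _ _ _ _ _ _ _ _ H1 dpl_s1) as H2.
  pose proof (dpl_mult _ _ _ _ _ _ _ _ H2 dpl_c1) as H3.
  eapply dpl_ext_all; [|eapply dpl_val; [exact H3| |]].
  - intros u v. reflexivity.
  - unfold QQx. simpl. fold s c d s1 c1 d1. ring.
  - unfold QQy. simpl. fold s c d s1 c1 d1. ring.
Qed.

End Pt.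
End SNC.

From Stdlib Require Nsatz.
Module CRA.
Import Nsatz.

Lemma CR_alg1_ (s c d s1 c1 d1 k kp : R) :
  c*c = 1 - s*s -> d*d = 1 - k*k*s*s -> c1*c1 = 1 - s1*s1 -> d1*d1 = 1 - kp*kp*s1*s1 -> kp*kp = 1 - k*k ->
  (c*d*d1) * (c1*c1 + k*k*s*s*s1*s1) - (s*d1) * (2 * k * k * s * (c * d) * s1 * s1)
  = (c * d * (c1 * d1 * c1 + s1 * (- s1 * d1))) * (c1*c1 + k*k*s*s*s1*s1)
    - (c*d*s1*c1) * (2 * c1 * (- s1 * d1) + 2 * k * k * s * s * s1 * (c1 * d1)).
Proof. intros. nsatz. Qed.

Lemma CR_alg2_ (s c d s1 c1 d1 k kp : R) :
  c*c = 1 - s*s -> d*d = 1 - k*k*s*s -> c1*c1 = 1 - s1*s1 -> d1*d1 = 1 - kp*kp*s1*s1 -> kp*kp = 1 - k*k ->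
  (s * (- kp * kp * s1 * c1)) * (c1*c1 + k*k*s*s*s1*s1) - (s*d1) * (2 * c1 * (- s1 * d1) + 2 * k * k * s * s * s1 * (c1 * d1))
  = - ((((- s * d) * d + c * (- k * k * s * c)) * s1 * c1) * (c1*c1 + k*k*s*s*s1*s1)
       - (c*d*s1*c1) * (2 * k * k * s * (c * d) * s1 * s1)).
Proof. intros. nsatz. Qed.

End CRA.

Lemma CR_alg1 (s c d s1 c1 d1 k kp : R) :
  c*c = 1 - s*s -> d*d = 1 - k*k*s*s -> c1*c1 = 1 - s1*s1 -> d1*d1 = 1 - kp*kp*s1*s1 -> kp*kp = 1 - k*k ->
  (c*d*d1) * (c1*c1 + k*k*s*s*s1*s1) - (s*d1) * (2 * k * k * s * (c * d) * s1 * s1)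
  = (c * d * (c1 * d1 * c1 + s1 * (- s1 * d1))) * (c1*c1 + k*k*s*s*s1*s1)
    - (c*d*s1*c1) * (2 * c1 * (- s1 * d1) + 2 * k * k * s * s * s1 * (c1 * d1)).
Proof. intros; apply (CRA.CR_alg1_ _ _ _ _ _ _ _ kp); auto. Qed.

Lemma CR_alg2 (s c d s1 c1 d1 k kp : R) :
  c*c = 1 - s*s -> d*d = 1 - k*k*s*s -> c1*c1 = 1 - s1*s1 -> d1*d1 = 1 - kp*kp*s1*s1 -> kp*kp = 1 - k*k ->
  (s * (- kp * kp * s1 * c1)) * (c1*c1 + k*k*s*s*s1*s1) - (s*d1) * (2 * c1 * (- s1 * d1) + 2 * k * k * s * s * s1 * (c1 * d1))
  = - ((((- s * d) * d + c * (- k * k * s * c)) * s1 * c1) * (c1*c1 + k*k*s*s*s1*s1)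
       - (c*d*s1*c1) * (2 * k * k * s * (c * d) * s1 * s1)).
Proof. intros; apply (CRA.CR_alg2_ _ _ _ _ _ _ _ kp); auto. Qed.


Section SNC2.
Variable k : R.
Hypothesis Hk : 0 < k < 1.

Definition UX x y := (PPx k x y * Dd k x y - Pf k x y * DDx k x y) / Dd k x y ^ 2.
Definition UY x y := (PPy k x y * Dd k x y - Pf k x y * DDy k x y) / Dd k x y ^ 2.
Definition VX x y := (QQx k x y * Dd k x y - Qf k x y * DDx k x y) / Dd k x y ^ 2.
Definition VY x y := (QQy k x y * Dd k x y - Qf k x y * DDy k x y) / Dd k x y ^ 2.

Lemma dpl_U x y : Dd k x y <> 0 -> dpl (Uf k) x y (UX x y) (UY x y).
Proof.
  intros HD.
  pose proof (dpl_mult _ _ _ _ _ _ _ _ (dpl_P k Hk x y) (dpl_inv _ _ _ _ _ (dpl_D k Hk x y) HD)) as H.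
  eapply dpl_val. exact H.
  - unfold UX. field. auto.
  - unfold UY. field. auto.
Qed.

Lemma dpl_V x y : Dd k x y <> 0 -> dpl (Vf k) x y (VX x y) (VY x y).
Proof.
  intros HD.
  pose proof (dpl_mult _ _ _ _ _ _ _ _ (dpl_Q k Hk x y) (dpl_inv _ _ _ _ _ (dpl_D k Hk x y) HD)) as H.
  eapply dpl_val. exact H.
  - unfold VX. field. auto.
  - unfold VY. field. auto.
Qed.

Lemma rel_c u m : cn u m * cn u m = 1 - sn u m * sn u m.
Proof. pose proof (sn_sq u m). nra. Qed.
Lemma rel_d u m : m ^ 2 < 1 -> dn u m * dn u m = 1 - m * m * sn u m * sn u m.
Proof. intros. pose proof (dn_sq u m H). nra. Qed.
Lemma rel_kp : kp k * kp k = 1 - k * k.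
Proof. pose proof (kp_sq k Hk). nra. Qed.

Lemma CR1 x y : Dd k x y <> 0 -> UX x y = VY x y.
Proof.
  intros HD. unfold UX, VY. f_equal.
  assert (ED: Dd k x y = cn y (kp k) * cn y (kp k) + k*k*sn x k*sn x k*sn y (kp k)*sn y (kp k)) by (unfold Dd; ring).
  rewrite ED. unfold PPx, Pf, DDx, QQy, Qf, DDy.
  apply (CR_alg1 _ _ _ _ _ _ _ (kp k)); auto using rel_c, rel_d, k2, kp2, rel_kp.
Qed.

Lemma CR2 x y : Dd k x y <> 0 -> UY x y = - VX x y.
Proof.
  intros HD. unfold UY, VX.
  assert (ED: Dd k x y = cn y (kp k) * cn y (kp k) + k*k*sn x k*sn x k*sn y (kp k)*sn y (kp k)) by (unfold Dd; ring).
  rewrite ED. unfold PPy, Pf, DDx, QQx, Qf, DDy.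
  unfold Rdiv. rewrite (CR_alg2 _ (cn x k) (dn x k) _ _ _ _ (kp k)); auto using rel_c, rel_d, k2, kp2, rel_kp. ring.
Qed.

End SNC2.

Definition CL (f : C -> C) (z0 l : C) : Prop :=
  forall eps, 0 < eps -> exists del, 0 < del /\
    forall z, z <> z0 -> Cmod (Cminus z z0) < del -> Cmod (Cminus (f z) l) < eps.

Lemma sqrt2_pos : 0 < sqrt 2.
Proof. apply sqrt_lt_R0. lra. Qed.

Lemma CL_filterlim f z0 l : CL f z0 l -> filterlim f (locally' z0) (locally l).
Proof.
  intros H. apply filterlim_locally. intros eps.
  destruct (H eps (cond_pos eps)) as [del [Hdel Hz]].
  pose proof sqrt2_pos.
  exists (mkposreal (del / sqrt 2) (Rdiv_lt_0_compat _ _ Hdel H0)).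
  intros y Hy Hne. apply C_NormedModule_mixin_compat1.
  apply Hz; auto.
  pose proof (C_NormedModule_mixin_compat2 z0 y (mkposreal (del / sqrt 2) (Rdiv_lt_0_compat _ _ Hdel H0)) Hy).
  simpl in H1. replace (sqrt 2 * (del / sqrt 2)) with del in H1 by (field; lra). exact H1.
Qed.

Lemma filterlim_CL f z0 l : filterlim f (locally' z0) (locally l) -> CL f z0 l.
Proof.
  intros H eps Heps. pose proof sqrt2_pos.
  pose proof (proj1 (filterlim_locally f l) H (mkposreal (eps / sqrt 2) (Rdiv_lt_0_compat _ _ Heps H0))) as H1.
  destruct H1 as [r Hr]. exists r. split; [apply cond_pos|].
  intros z Hne Hz. 
  assert (Hb : ball z0 r z) by (apply C_NormedModule_mixin_compat1; exact Hz).
  specialize (Hr z Hb Hne).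
  pose proof (C_NormedModule_mixin_compat2 l (f z) _ Hr). simpl in H1.
  replace (sqrt 2 * (eps / sqrt 2)) with eps in H1 by (field; lra). exact H1.
Qed.

Lemma Cmod_re (z : C) : Rabs (Re z) <= Cmod z.
Proof. apply re_le_Cmod. Qed.

Lemma Cmod_im (z : C) : Rabs (Im z) <= Cmod z.
Proof.
  unfold Cmod. rewrite <- sqrt_Rsqr_abs. apply sqrt_le_1_alt.
  destruct z as [a b]. unfold Rsqr, Im. simpl. nra.
Qed.

Lemma CL_ext f g z0 l : (forall z, z <> z0 -> f z = g z) -> CL f z0 l -> CL g z0 l.
Proof.
  intros E H eps Heps. destruct (H eps Heps) as [del [Hd Hz]]. exists del; split; auto.
  intros z Hne Hz'. rewrite <- E; auto.
Qed.

Lemma CL_const a z0 : CL (fun _ => a) z0 a.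
Proof.
  intros eps Heps. exists 1; split; [lra|]. intros. replace (Cminus a a) with (RtoC 0).
  rewrite Cmod_0; auto. unfold Cminus. rewrite Cplus_opp_r. reflexivity.
Qed.

Lemma CL_id z0 : CL (fun z => z) z0 z0.
Proof. intros eps Heps. exists eps; split; auto. Qed.

Lemma Cmod_sub_tri (a b c : C) : Cmod (Cminus a c) <= Cmod (Cminus a b) + Cmod (Cminus b c).
Proof.
  replace (Cminus a c) with (Cplus (Cminus a b) (Cminus b c)) by (unfold Cminus; ring).
  apply Cmod_triangle.
Qed.

Lemma CL_plus f g z0 a b : CL f z0 a -> CL g z0 b -> CL (fun z => Cplus (f z) (g z)) z0 (Cplus a b).
Proof.
  intros Hf Hg eps Heps.
  destruct (Hf (eps/2) ltac:(lra)) as [d1 [Hd1 H1]]. destruct (Hg (eps/2) ltac:(lra)) as [d2 [Hd2 H2]].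
  exists (Rmin d1 d2). split. apply Rmin_pos; auto.
  intros z Hne Hz.
  replace (Cminus (Cplus (f z) (g z)) (Cplus a b)) with (Cplus (Cminus (f z) a) (Cminus (g z) b)) by (unfold Cminus; ring).
  eapply Rle_lt_trans. apply Cmod_triangle.
  assert (Cmod (Cminus z z0) < d1) by (eapply Rlt_le_trans; [exact Hz| apply Rmin_l]).
  assert (Cmod (Cminus z z0) < d2) by (eapply Rlt_le_trans; [exact Hz| apply Rmin_r]).
  specialize (H1 z Hne H). specialize (H2 z Hne H0). lra.
Qed.

Lemma CL_mult f g z0 a b : CL f z0 a -> CL g z0 b -> CL (fun z => Cmult (f z) (g z)) z0 (Cmult a b).
Proof.
  intros Hf Hg eps Heps.
  set (M := 1 + Cmod a + Cmod b).
  assert (HM : 0 < M) by (unfold M; pose proof (Cmod_ge_0 a); pose proof (Cmod_ge_0 b); lra).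
  set (e1 := Rmin 1 (eps / (2 * M))).
  assert (He1 : 0 < e1) by (apply Rmin_pos; [lra| apply Rdiv_lt_0_compat; lra]).
  destruct (Hf e1 He1) as [d1 [Hd1 H1]]. destruct (Hg e1 He1) as [d2 [Hd2 H2]].
  exists (Rmin d1 d2). split. apply Rmin_pos; auto.
  intros z Hne Hz.
  assert (Cmod (Cminus z z0) < d1) by (eapply Rlt_le_trans; [exact Hz| apply Rmin_l]).
  assert (Cmod (Cminus z z0) < d2) by (eapply Rlt_le_trans; [exact Hz| apply Rmin_r]).
  specialize (H1 z Hne H). specialize (H2 z Hne H0).
  set (u := Cminus (f z) a) in *. set (v := Cminus (g z) b) in *.
  replace (Cminus (Cmult (f z) (g z)) (Cmult a b)) with (Cplus (Cmult u v) (Cplus (Cmult a v) (Cmult u b)))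
    by (unfold u, v, Cminus; ring).
  eapply Rle_lt_trans. apply Cmod_triangle. rewrite !Cmod_mult.
  eapply Rle_lt_trans. apply Rplus_le_compat_l. apply Cmod_triangle. rewrite !Cmod_mult.
  assert (e1 <= 1) by apply Rmin_l. assert (e1 <= eps / (2 * M)) by apply Rmin_r.
  pose proof (Cmod_ge_0 u). pose proof (Cmod_ge_0 v). pose proof (Cmod_ge_0 a). pose proof (Cmod_ge_0 b).
  assert (Cmod u * Cmod v <= e1 * e1) by (apply Rmult_le_compat; lra).
  assert (Cmod a * Cmod v <= Cmod a * e1) by (apply Rmult_le_compat_l; lra).
  assert (Cmod u * Cmod b <= e1 * Cmod b) by (apply Rmult_le_compat_r; lra).
  assert (e1 * M <= eps / 2).
  { apply Rle_trans with (eps / (2 * M) * M). apply Rmult_le_compat_r; lra. right; field; lra. }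
  unfold M in *. nra.
Qed.

Lemma CL_inv f z0 a : a <> RtoC 0 -> CL f z0 a -> CL (fun z => Cinv (f z)) z0 (Cinv a).
Proof.
  intros Ha Hf eps Heps.
  assert (Hma : 0 < Cmod a) by (apply Cmod_gt_0; auto).
  set (e1 := Rmin (Cmod a / 2) (eps * Cmod a * Cmod a / 2)).
  assert (He1 : 0 < e1) by (apply Rmin_pos; [lra| apply Rdiv_lt_0_compat; [|lra]; apply Rmult_lt_0_compat; [apply Rmult_lt_0_compat|]; lra]).
  destruct (Hf e1 He1) as [d1 [Hd1 H1]]. exists d1; split; auto.
  intros z Hne Hz. specialize (H1 z Hne Hz).
  assert (e1 <= Cmod a / 2) by apply Rmin_l. assert (e1 <= eps * Cmod a * Cmod a / 2) by apply Rmin_r.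
  assert (Hfz : Cmod a / 2 <= Cmod (f z)).
  { pose proof (Cmod_sub_tri a (f z) (RtoC 0)).
    replace (Cminus a (RtoC 0)) with a in H2 by (unfold Cminus; ring).
    replace (Cminus (f z) (RtoC 0)) with (f z) in H2 by (unfold Cminus; ring).
    replace (Cminus a (f z)) with (Copp (Cminus (f z) a)) in H2 by (unfold Cminus; ring).
    rewrite Cmod_opp in H2. lra. }
  assert (Hfz0 : f z <> RtoC 0) by (intro h; rewrite h, Cmod_0 in Hfz; lra).
  replace (Cminus (Cinv (f z)) (Cinv a)) with (Cdiv (Copp (Cminus (f z) a)) (Cmult (f z) a))
    by (field; auto).
  rewrite Cmod_div by (apply Cmult_neq_0; auto). rewrite Cmod_opp, Cmod_mult.
  assert (0 < Cmod (f z)) by lra.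
  apply Rmult_lt_reg_r with (Cmod (f z) * Cmod a). apply Rmult_lt_0_compat; lra.
  unfold Rdiv. rewrite Rmult_assoc, Rinv_l by (apply Rgt_not_eq; apply Rmult_lt_0_compat; lra).
  rewrite Rmult_1_r.
  apply Rlt_le_trans with e1; auto.
  apply Rle_trans with (eps * Cmod a * Cmod a / 2); auto.
  assert (eps * (Cmod a / 2) * Cmod a <= eps * (Cmod (f z) * Cmod a)).
  { rewrite Rmult_assoc. apply Rmult_le_compat_l. lra. apply Rmult_le_compat_r; lra. }
  lra.
Qed.

Lemma CL_unique f z0 a b : CL f z0 a -> CL f z0 b -> a = b.
Proof.
  intros Ha Hb. destruct (Ceq_dec a b) as [|hne]; auto. exfalso.
  assert (Hm : 0 < Cmod (Cminus a b)) by (apply Cmod_gt_0; apply Cminus_eq_contra; auto).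
  destruct (Ha (Cmod (Cminus a b) / 2) ltac:(lra)) as [d1 [Hd1 H1]].
  destruct (Hb (Cmod (Cminus a b) / 2) ltac:(lra)) as [d2 [Hd2 H2]].
  set (d := Rmin d1 d2 / 2).
  assert (Hd : 0 < d) by (unfold d; pose proof (Rmin_pos _ _ Hd1 Hd2); lra).
  set (z := Cplus z0 (RtoC d)).
  assert (Hz : Cminus z z0 = RtoC d) by (unfold z, Cminus; ring).
  assert (Hne : z <> z0).
  { intro h. rewrite h in Hz. unfold Cminus in Hz. rewrite Cplus_opp_r in Hz.
    injection Hz. lra. }
  assert (Hmod : Cmod (Cminus z z0) = d) by (rewrite Hz, Cmod_R, Rabs_right; lra).
  assert (d < d1) by (unfold d; pose proof (Rmin_l d1 d2); lra).
  assert (d < d2) by (unfold d; pose proof (Rmin_r d1 d2); lra).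
  specialize (H1 z Hne ltac:(lra)). specialize (H2 z Hne ltac:(lra)).
  pose proof (Cmod_sub_tri a (f z) b).
  replace (Cminus a (f z)) with (Copp (Cminus (f z) a)) in H3 by (unfold Cminus; ring).
  rewrite Cmod_opp in H3. lra.
Qed.

Definition CD (f : C -> C) (z0 l : C) : Prop :=
  CL (fun z => Cdiv (Cminus (f z) (f z0)) (Cminus z z0)) z0 l.

Lemma Cmod_le_sum (z : C) : Cmod z <= Rabs (Re z) + Rabs (Im z).
Proof.
  destruct z as [a b].
  replace (a, b) with (Cplus (RtoC a) (Cmult Ci (RtoC b))).
  eapply Rle_trans. apply Cmod_triangle. rewrite Cmod_mult, Cmod_Ci, !Cmod_R. unfold Re, Im. simpl. replace (a + (0*b - 1*0)) with a by ring. replace (0 + (0*0+1*b)) with b by ring. lra.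
  unfold Cplus, Cmult, Ci, RtoC. simpl. f_equal; ring.
Qed.

Lemma max_le_Cmod (z : C) : Rmax (Rabs (Re z)) (Rabs (Im z)) <= Cmod z.
Proof. apply Rmax_lub. apply Cmod_re. apply Cmod_im. Qed.

Lemma cderiv (f : C -> C) x0 y0 a b :
  dpl (fun x y => Re (f (x, y))) x0 y0 a b ->
  dpl (fun x y => Im (f (x, y))) x0 y0 (- b) a ->
  CD f (x0, y0) (a, - b).
Proof.
  intros HU HV eps Heps.
  assert (He : 0 < eps / 4) by lra.
  destruct (HU (mkposreal _ He)) as [d1 H1]. destruct (HV (mkposreal _ He)) as [d2 H2].
  exists (Rmin d1 d2). split. apply Rmin_pos; apply cond_pos.
  intros [u v] Hne Hz.
  set (w := Cminus (u, v) (x0, y0)).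
  assert (Hw0 : w <> RtoC 0) by (unfold w; apply Cminus_eq_contra; auto).
  assert (Hwp : 0 < Cmod w) by (apply Cmod_gt_0; auto).
  assert (Hu : Rabs (u - x0) <= Cmod w).
  { pose proof (Cmod_re w). unfold w, Cminus, Re in H. simpl in H. replace (u + - x0) with (u - x0) in H by ring. auto. }
  assert (Hv : Rabs (v - y0) <= Cmod w).
  { pose proof (Cmod_im w). unfold w, Cminus, Im in H. simpl in H. replace (v + - y0) with (v - y0) in H by ring. auto. }
  assert (Hmax : Rmax (Rabs (u - x0)) (Rabs (v - y0)) <= Cmod w) by (apply Rmax_lub; auto).
  fold w in Hz.
  assert (Hd1 : Rmin d1 d2 <= d1) by apply Rmin_l. assert (Hd2 : Rmin d1 d2 <= d2) by apply Rmin_r.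
  specialize (H1 u v ltac:(lra) ltac:(lra)). specialize (H2 u v ltac:(lra) ltac:(lra)). simpl in H1, H2.
  set (err := Cminus (Cminus (f (u, v)) (f (x0, y0))) (Cmult (a, - b) w)).
  assert (HRe : Rabs (Re err) <= eps / 4 * Cmod w).
  { eapply Rle_trans; [|apply Rmult_le_compat_l; [lra|exact Hmax]].
    replace (Re err) with (Re (f (u, v)) - Re (f (x0, y0)) - (a * (u - x0) + b * (v - y0))). exact H1.
    unfold err, w, Cminus, Cplus, Copp, Cmult, Re. simpl. ring. }
  assert (HIm : Rabs (Im err) <= eps / 4 * Cmod w).
  { eapply Rle_trans; [|apply Rmult_le_compat_l; [lra|exact Hmax]].
    replace (Im err) with (Im (f (u, v)) - Im (f (x0, y0)) - (- b * (u - x0) + a * (v - y0))). exact H2.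
    unfold err, w, Cminus, Cplus, Copp, Cmult, Im. simpl. ring. }
  replace (Cminus (Cdiv (Cminus (f (u, v)) (f (x0, y0))) w) (a, - b)) with (Cdiv err w)
    by (unfold err; field; auto).
  rewrite Cmod_div by auto.
  pose proof (Cmod_le_sum err).
  apply Rle_lt_trans with (eps / 2). 
  apply Rmult_le_reg_r with (Cmod w); auto. unfold Rdiv at 1. rewrite Rmult_assoc, Rinv_l, Rmult_1_r by lra. lra.
  lra.
Qed.

Lemma CD_cont f z0 l : CD f z0 l -> CL f z0 (f z0).
Proof.
  intros H.
  assert (H1 : CL (fun z => Cplus (f z0) (Cmult (Cminus z z0) (Cdiv (Cminus (f z) (f z0)) (Cminus z z0)))) z0
                  (Cplus (f z0) (Cmult (Cminus z0 z0) l))).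
  { apply CL_plus. apply CL_const. apply CL_mult; auto.
    apply (CL_plus (fun z => z) (fun _ => Copp z0)). apply CL_id. apply CL_const. }
  replace (Cplus (f z0) (Cmult (Cminus z0 z0) l)) with (f z0) in H1 by (unfold Cminus; ring).
  eapply CL_ext; [|exact H1]. intros z hz. simpl. field. apply Cminus_eq_contra; auto.
Qed.

Section SNC3.
Variable k : R.
Hypothesis Hk : 0 < k < 1.

Lemma Dd_near x0 y0 : Dd k x0 y0 <> 0 -> locally_2d (fun u v => Dd k u v <> 0) x0 y0.
Proof.
  intros H. apply continuity_2d_pt_neq_0; auto. eapply dpl_cont. apply (dpl_D k Hk).
Qed.

Lemma snC_CD x0 y0 : Dd k x0 y0 <> 0 -> CD (fun z => snC z k) (x0, y0) (UX k x0 y0, - UY k x0 y0).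
Proof.
  intros HD. destruct (Dd_near x0 y0 HD) as [del Hdel].
  apply cderiv.
  - apply (differentiable_pt_lim_ext (Uf k)).
    exists del. intros u v hu hv. rewrite snC_eq; auto.
    apply dpl_U; auto.
  - apply (differentiable_pt_lim_ext (Vf k)).
    exists del. intros u v hu hv. rewrite snC_eq; auto.
    eapply dpl_val. apply dpl_V; auto.
    rewrite (CR2 k Hk x0 y0 HD). ring.
    rewrite (CR1 k Hk x0 y0 HD). ring.
Qed.

Lemma snC_cont x0 y0 : Dd k x0 y0 <> 0 -> CL (fun z => snC z k) (x0, y0) (snC (x0, y0) k).
Proof. intros. eapply CD_cont. apply snC_CD; auto. Qed.

End SNC3.

Lemma CL_ext_loc f g z0 l : (exists del, 0 < del /\ forall z, z <> z0 -> Cmod (Cminus z z0) < del -> f z = g z) ->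
  CL f z0 l -> CL g z0 l.
Proof.
  intros [d0 [Hd0 E]] H eps Heps. destruct (H eps Heps) as [del [Hd Hz]].
  exists (Rmin d0 del). split. apply Rmin_pos; auto.
  intros z Hne Hz'. rewrite <- E; auto. apply Hz; auto.
  eapply Rlt_le_trans; [exact Hz'|apply Rmin_r]. eapply Rlt_le_trans; [exact Hz'|apply Rmin_l].
Qed.

Lemma CL_nonzero_near f z0 l : CL f z0 l -> l <> RtoC 0 ->
  exists del, 0 < del /\ forall z, z <> z0 -> Cmod (Cminus z z0) < del -> f z <> RtoC 0.
Proof.
  intros H Hl. assert (Hm : 0 < Cmod l) by (apply Cmod_gt_0; auto).
  destruct (H (Cmod l) Hm) as [del [Hd Hz]]. exists del; split; auto.
  intros z Hne Hz' E. specialize (Hz z Hne Hz'). rewrite E in Hz.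
  replace (Cminus (RtoC 0) l) with (Copp l) in Hz by (unfold Cminus; ring).
  rewrite Cmod_opp in Hz. lra.
Qed.

Lemma CL_sub f g z0 a b : CL f z0 a -> CL g z0 b -> CL (fun z => Cminus (f z) (g z)) z0 (Cminus a b).
Proof.
  intros Hf Hg. unfold Cminus. apply CL_plus; auto.
  pose proof (CL_mult (fun _ => RtoC (-1)) g z0 (RtoC (-1)) b (CL_const _ _) Hg).
  eapply CL_ext; [|replace (Copp b) with (Cmult (RtoC (-1)) b) by (unfold RtoC, Cmult, Copp; simpl; f_equal; ring); exact H].
  intros z _. unfold RtoC, Cmult, Copp; simpl. f_equal; ring.
Qed.

Lemma CL_dz z0 : CL (fun z => Cminus z z0) z0 (RtoC 0).
Proof.
  replace (RtoC 0) with (Cminus z0 z0) by (unfold Cminus; ring).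
  apply CL_sub. apply CL_id. apply CL_const.
Qed.

Lemma Cpow_nat_CL z0 n : (1 <= n)%nat -> CL (fun z => Cpow_nat (Cminus z z0) n) z0 (RtoC 0).
Proof.
  intros Hn. destruct n as [|n]; [lia|]. simpl.
  replace (RtoC 0) with (Cmult (RtoC 0) (Cpow_nat (RtoC 0) n)) by ring.
  apply CL_mult. apply CL_dz.
  clear Hn. induction n as [|n IH]; simpl. apply CL_const.
  apply CL_mult. apply CL_dz. auto.
Qed.

Lemma Cpow_nat_nz (a : C) n : a <> RtoC 0 -> Cpow_nat a n <> RtoC 0.
Proof.
  intros Ha. induction n as [|n IH]; simpl. apply C1_nz. apply Cmult_neq_0; auto.
Qed.

Lemma dz_nz z z0 : z <> z0 -> Cminus z z0 <> RtoC 0.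
Proof. intros. apply Cminus_eq_contra; auto. Qed.

Lemma order_CL f z0 m : order_at f z0 m -> exists L, L <> RtoC 0 /\
   CL (fun z => Cmult (Cpow_Z (Cminus z z0) (- m)) (f z)) z0 L.
Proof. intros [L [HL H]]. exists L. split; auto. apply filterlim_CL; auto. Qed.

Lemma CL_order f z0 m L : L <> RtoC 0 ->
   CL (fun z => Cmult (Cpow_Z (Cminus z z0) (- m)) (f z)) z0 L -> order_at f z0 m.
Proof. intros HL H. exists L. split; auto. apply CL_filterlim; auto. Qed.

Lemma order_pos_zero f z0 m : order_at f z0 m -> (0 < m)%Z -> CL f z0 (RtoC 0).
Proof.
  intros H Hm. destruct (order_CL _ _ _ H) as [L [HL HCL]].
  destruct m as [|p|p]; try lia. simpl in HCL.
  set (n := Pos.to_nat p) in *.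
  assert (Hn : (1 <= n)%nat) by (unfold n; lia).
  pose proof (CL_mult _ _ _ _ _ (Cpow_nat_CL z0 n Hn) HCL) as H2.
  replace (Cmult (RtoC 0) L) with (RtoC 0) in H2 by ring.
  eapply CL_ext; [|exact H2]. intros z hz. simpl.
  pose proof (Cpow_nat_nz _ n (dz_nz _ _ hz)). field. auto.
Qed.

Lemma order_neg_nolimit f z0 m L0 : order_at f z0 m -> (m < 0)%Z -> CL f z0 L0 -> False.
Proof.
  intros H Hm HL0. destruct (order_CL _ _ _ H) as [L [HL HCL]].
  destruct m as [|p|p]; try lia. simpl in HCL.
  set (n := Pos.to_nat p) in *.
  assert (Hn : (1 <= n)%nat) by (unfold n; lia).
  pose proof (CL_mult _ _ _ _ _ (Cpow_nat_CL z0 n Hn) HL0) as H2.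
  replace (Cmult (RtoC 0) L0) with (RtoC 0) in H2 by ring.
  apply HL. eapply CL_unique; eauto.
Qed.

Lemma Cinv_0 : Cinv (RtoC 0) = RtoC 0.
Proof. unfold Cinv, RtoC; simpl. f_equal; unfold Rdiv; [apply Rmult_0_l | rewrite Ropp_0; apply Rmult_0_l]. Qed.

Definition phiG (N A Cc S : R) (w : C -> C) (z : C) : C :=
  Cminus (Cdiv (RtoC N) (Cminus (RtoC A) (Cmult (RtoC Cc) (Cmult (w z) (w z))))) (RtoC S).

Definition qG (A Cc : R) (w : C -> C) (z : C) : C :=
  Cminus (RtoC A) (Cmult (RtoC Cc) (Cmult (w z) (w z))).

Lemma CL_q A Cc w z0 w0 : CL w z0 w0 -> CL (qG A Cc w) z0 (Cminus (RtoC A) (Cmult (RtoC Cc) (Cmult w0 w0))).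
Proof.
  intros H. unfold qG. apply CL_sub. apply CL_const. apply CL_mult. apply CL_const. apply CL_mult; auto.
Qed.

Lemma CL_phi_reg N A Cc S w z0 w0 : CL w z0 w0 ->
  Cminus (RtoC A) (Cmult (RtoC Cc) (Cmult w0 w0)) <> RtoC 0 ->
  CL (phiG N A Cc S w) z0 (Cminus (Cdiv (RtoC N) (Cminus (RtoC A) (Cmult (RtoC Cc) (Cmult w0 w0)))) (RtoC S)).
Proof.
  intros H Hq. unfold phiG. apply CL_sub; [|apply CL_const].
  unfold Cdiv. apply CL_mult. apply CL_const. apply CL_inv; auto. apply (CL_q A Cc w z0 w0 H).
Qed.

Lemma ord_regular N A Cc S w z0 w0 : CL w z0 w0 ->
  Cminus (RtoC A) (Cmult (RtoC Cc) (Cmult w0 w0)) <> RtoC 0 ->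
  Cminus (Cdiv (RtoC N) (Cminus (RtoC A) (Cmult (RtoC Cc) (Cmult w0 w0)))) (RtoC S) <> RtoC 0 ->
  order_at (phiG N A Cc S w) z0 0.
Proof.
  intros H Hq Hp. eapply CL_order; [exact Hp|].
  eapply CL_ext; [|apply CL_phi_reg; eauto]. intros z _. simpl. ring.
Qed.

Lemma ord_pole N A Cc S w z0 l : CD w z0 l -> l <> RtoC 0 -> w z0 <> RtoC 0 ->
  Cminus (RtoC A) (Cmult (RtoC Cc) (Cmult (w z0) (w z0))) = RtoC 0 -> N <> 0 -> Cc <> 0 ->
  order_at (phiG N A Cc S w) z0 (-1).
Proof.
  intros HD Hl Hw Hq HN HC.
  set (w0 := w z0) in *.
  set (L1 := Cmult (RtoC (- Cc)) (Cmult (Cplus w0 w0) l)).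
  assert (HL1 : L1 <> RtoC 0).
  { unfold L1. apply Cmult_neq_0. intro h. apply HC. injection h. lra.
    apply Cmult_neq_0; auto. replace (Cplus w0 w0) with (Cmult (Cplus (RtoC 1) (RtoC 1)) w0) by ring.
    apply Cmult_neq_0; auto. unfold Cplus, RtoC. simpl. intro h; injection h; lra. }
  assert (HA : RtoC A = Cmult (RtoC Cc) (Cmult w0 w0)).
  { apply Ceq_minus. exact Hq. }
  assert (Hcl : CL (fun z => Cmult (RtoC (- Cc)) (Cmult (Cplus (w z) w0) (Cdiv (Cminus (w z) w0) (Cminus z z0)))) z0 L1).
  { apply CL_mult. apply CL_const. apply CL_mult. apply CL_plus. apply CD_cont in HD. exact HD. apply CL_const. exact HD. }
  apply (CL_order _ _ _ (Cminus (Cmult (RtoC N) (Cinv L1)) (Cmult (RtoC 0) (RtoC S)))).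
  { replace (Cmult (RtoC 0) (RtoC S)) with (RtoC 0) by ring.
    replace (Cminus (Cmult (RtoC N) (Cinv L1)) (RtoC 0)) with (Cmult (RtoC N) (Cinv L1)) by (unfold Cminus; ring).
    apply Cmult_neq_0. intro h; injection h; lra. intro h. apply HL1.
    assert (Cmult L1 (Cinv L1) = RtoC 1) by (apply Cinv_r; auto). rewrite h in H. 
    rewrite Cmult_0_r in H. exfalso. apply C1_nz. auto. }
  apply (CL_ext (fun z => Cminus (Cmult (RtoC N) (Cinv (Cmult (RtoC (- Cc)) (Cmult (Cplus (w z) w0) (Cdiv (Cminus (w z) w0) (Cminus z z0))))))
                                   (Cmult (Cminus z z0) (RtoC S)))).
  2: { apply CL_sub. apply CL_mult. apply CL_const. apply CL_inv; auto. apply CL_mult. apply CL_dz. apply CL_const. }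
  intros z hz. simpl. unfold phiG.
  pose proof (dz_nz _ _ hz) as Hdz.
  assert (Eq : Cminus (RtoC A) (Cmult (RtoC Cc) (Cmult (w z) (w z))) =
               Cmult (Cmult (RtoC (- Cc)) (Cmult (Cplus (w z) w0) (Cdiv (Cminus (w z) w0) (Cminus z z0)))) (Cminus z z0)).
  { rewrite HA. rewrite RtoC_opp. field. auto. }
  rewrite Eq.
  set (Q := Cmult (RtoC (- Cc)) (Cmult (Cplus (w z) w0) (Cdiv (Cminus (w z) w0) (Cminus z z0)))).
  destruct (Ceq_dec Q (RtoC 0)) as [hQ|hQ].
  - rewrite hQ. rewrite Cmult_0_l. unfold Cdiv.
    rewrite Cinv_0. ring.
  - unfold Cdiv. field. split; auto.
Qed.

Lemma two_nz : Cplus (RtoC 1) (RtoC 1) <> RtoC 0.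
Proof. unfold Cplus, RtoC. simpl. intro h; injection h; lra. Qed.

Lemma RtoC_nz (x : R) : x <> 0 -> RtoC x <> RtoC 0.
Proof. intros H h. injection h. auto. Qed.

Lemma ord_zero1 N A Cc S w z0 l : CD w z0 l -> l <> RtoC 0 -> w z0 <> RtoC 0 ->
  Cminus (RtoC A) (Cmult (RtoC Cc) (Cmult (w z0) (w z0))) <> RtoC 0 ->
  RtoC N = Cmult (RtoC S) (Cminus (RtoC A) (Cmult (RtoC Cc) (Cmult (w z0) (w z0)))) ->
  S <> 0 -> Cc <> 0 ->
  order_at (phiG N A Cc S w) z0 1.
Proof.
  intros HD Hl Hw Hq HN HS HC.
  set (w0 := w z0) in *. set (q0 := Cminus (RtoC A) (Cmult (RtoC Cc) (Cmult w0 w0))) in *.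
  pose proof (CD_cont _ _ _ HD) as Hw0. fold w0 in Hw0.
  pose proof (CL_q A Cc w z0 w0 Hw0) as Hqc. fold q0 in Hqc.
  destruct (CL_nonzero_near _ _ _ Hqc Hq) as [del [Hdel Hqn]].
  apply (CL_order _ _ _ (Cmult (Cmult (RtoC S) (RtoC Cc)) (Cmult (Cmult (Cplus w0 w0) l) (Cinv q0)))).
  { apply Cmult_neq_0. apply Cmult_neq_0; apply RtoC_nz; auto.
    apply Cmult_neq_0. apply Cmult_neq_0; auto.
    replace (Cplus w0 w0) with (Cmult (Cplus (RtoC 1) (RtoC 1)) w0) by ring.
    apply Cmult_neq_0; auto. apply two_nz.
    intro h. assert (Cmult q0 (Cinv q0) = RtoC 1) by (apply Cinv_r; auto). rewrite h, Cmult_0_r in H.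
    apply C1_nz; auto. }
  eapply CL_ext_loc.
  2: { apply CL_mult. apply CL_const. apply CL_mult. apply CL_mult. apply CL_plus. exact Hw0. apply CL_const.
       exact HD. apply CL_inv; auto. exact Hqc. }
  exists del. split; auto. intros z hz hd. specialize (Hqn z hz hd). unfold qG in Hqn.
  pose proof (dz_nz _ _ hz) as Hdz. simpl. unfold phiG, qG. rewrite HN. fold w0. unfold q0.
  field. auto.
Qed.

Lemma ord_zero2 N A Cc S w z0 l : CD w z0 l -> l <> RtoC 0 -> w z0 = RtoC 0 ->
  A <> 0 -> N = S * A -> S <> 0 -> Cc <> 0 ->
  order_at (phiG N A Cc S w) z0 2.
Proof.
  intros HD Hl Hw HA HN HS HC.
  pose proof (CD_cont _ _ _ HD) as Hw0.
  pose proof (CL_q A Cc w z0 (w z0) Hw0) as Hqc.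
  assert (Hq0 : Cminus (RtoC A) (Cmult (RtoC Cc) (Cmult (w z0) (w z0))) = RtoC A) by (rewrite Hw; unfold Cminus; ring).
  rewrite Hq0 in Hqc.
  destruct (CL_nonzero_near _ _ _ Hqc (RtoC_nz _ HA)) as [del [Hdel Hqn]].
  apply (CL_order _ _ _ (Cmult (Cmult (RtoC S) (RtoC Cc)) (Cmult (Cmult l l) (Cinv (RtoC A))))).
  { apply Cmult_neq_0. apply Cmult_neq_0; apply RtoC_nz; auto.
    apply Cmult_neq_0. apply Cmult_neq_0; auto.
    intro h. assert (Cmult (RtoC A) (Cinv (RtoC A)) = RtoC 1) by (apply Cinv_r; apply RtoC_nz; auto). rewrite h, Cmult_0_r in H.
    apply C1_nz; auto. }
  eapply CL_ext_loc.
  2: { apply CL_mult. apply CL_const. apply CL_mult. apply CL_mult. exact HD. exact HD. apply CL_inv; auto.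
       apply RtoC_nz; auto. exact Hqc. }
  exists del. split; auto. intros z hz hd. specialize (Hqn z hz hd). unfold qG in Hqn.
  pose proof (dz_nz _ _ hz) as Hdz. simpl. unfold phiG, qG. rewrite HN, Hw.
  rewrite RtoC_mult. field. auto.
Qed.

Lemma ord_limit0 f z0 L : CL f z0 L -> L <> RtoC 0 -> order_at f z0 0.
Proof.
  intros H HL. apply (CL_order _ _ _ L HL). eapply CL_ext; [|exact H]. intros z _. simpl. ring.
Qed.

Lemma ord_m1_pos f z0 m : order_at f z0 (-1) -> order_at f z0 m -> (0 < m)%Z -> False.
Proof.
  intros H1 H2 Hm. pose proof (order_pos_zero _ _ _ H2 Hm) as H0.
  destruct (order_CL _ _ _ H1) as [L [HL HCL]].
  pose proof (CL_mult _ _ _ _ _ (Cpow_nat_CL z0 1 (le_n 1)) H0) as H3.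
  apply HL. eapply CL_unique. exact HCL. replace (RtoC 0) with (Cmult (RtoC 0) (RtoC 0)) by ring.
  eapply CL_ext; [|exact H3]. intros z _. reflexivity.
Qed.

Section SNPOLE.
Variable k : R.
Hypothesis Hk : 0 < k < 1.

Definition Gf u v := cn u k * dn u k * sn v (kp k).

Lemma dpl_G x y : exists a b, dpl Gf x y a b.
Proof.
  pose proof (dpl_mult _ _ _ _ _ _ _ _ (dpl_c k Hk x y) (dpl_d k Hk x y)) as H1.
  pose proof (dpl_mult _ _ _ _ _ _ _ _ H1 (dpl_s1 k Hk x y)) as H2.
  eexists; eexists. exact H2.
Qed.

Lemma d1_ge v : k ^ 2 <= dn v (kp k) ^ 2.
Proof.
  rewrite dn_sq by (apply kp2; auto). rewrite (kp_sq k Hk).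
  pose proof (sn_sq v (kp k)). pose proof (pow2_ge_0 (cn v (kp k))). pose proof (pow2_ge_0 k).
  assert (sn v (kp k) ^ 2 <= 1) by lra. assert (k ^ 2 <= 1) by (pose proof (k2 k Hk); lra).
  assert (0 <= (1 - k ^ 2) * (1 - sn v (kp k) ^ 2)) by (apply Rmult_le_pos; lra). lra.
Qed.

Lemma big_w u v : Dd k u v <> 0 -> 3/4 <= Rabs (Gf u v) ->
  1 / (2 * Dd k u v) <= Cmod (snC (u, v) k) ^ 2.
Proof.
  intros HD HG. rewrite snC_eq by auto. rewrite Cmod2_alt. unfold Re, Im; simpl.
  pose proof (Dd_ge k u v) as HD0. assert (HDp : 0 < Dd k u v) by lra.
  unfold Uf, Vf.
  set (D := Dd k u v) in *.
  assert (HP : k ^ 2 * sn u k ^ 2 <= Pf k u v ^ 2).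
  { unfold Pf. rewrite Rpow_mult_distr. rewrite (Rmult_comm (k ^ 2)). apply Rmult_le_compat_l. apply pow2_ge_0. apply d1_ge. }
  assert (HQ : cn v (kp k) ^ 2 / 2 <= Qf k u v ^ 2).
  { unfold Qf. replace (cn u k * dn u k * sn v (kp k) * cn v (kp k)) with (Gf u v * cn v (kp k)) by (unfold Gf; ring).
    rewrite Rpow_mult_distr.
    assert (1/2 <= Gf u v ^ 2).
    { rewrite <- (pow2_abs (Gf u v)). nra. }
    pose proof (pow2_ge_0 (cn v (kp k))). nra. }
  assert (HDle : D <= cn v (kp k) ^ 2 + k ^ 2 * sn u k ^ 2).
  { unfold D, Dd. pose proof (sn_sq v (kp k)). pose proof (pow2_ge_0 (cn v (kp k))).
    assert (sn v (kp k) ^ 2 <= 1) by lra. pose proof (pow2_ge_0 (k * sn u k)).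
    rewrite Rpow_mult_distr in H2. nra. }
  assert (HS : D / 2 <= Pf k u v ^ 2 + Qf k u v ^ 2).
  { pose proof (pow2_ge_0 (k * sn u k)). rewrite Rpow_mult_distr in H. nra. }
  assert (E : Pf k u v * / D * (Pf k u v * / D * 1) + Qf k u v * / D * (Qf k u v * / D * 1) = (Pf k u v ^ 2 + Qf k u v ^ 2) / D ^ 2)
    by (field; lra).
  rewrite E.
  apply Rle_trans with ((D / 2) / D ^ 2). right; field; lra.
  unfold Rdiv. apply Rmult_le_compat_r. apply Rlt_le, Rinv_0_lt_compat. nra. lra.
Qed.

Lemma snpole_lim N A Cc S y0 : 0 < A -> 0 < Cc -> (y0 = ellK (kp k) \/ y0 = - ellK (kp k)) ->
  CL (phiG N A Cc S (fun z => snC z k)) (0, y0) (RtoC (- S)).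
Proof.
  intros HA HC Hy0 eps Heps.
  assert (Hm2 := kp2 k Hk). assert (Hk2 := k2 k Hk).
  assert (HD0 : Dd k 0 y0 = 0).
  { unfold Dd. rewrite sn_0 by auto. destruct Hy0 as [->| ->].
    rewrite cn_K by auto. ring. rewrite cn_mK by auto. ring. }
  assert (HG0 : Rabs (Gf 0 y0) = 1).
  { unfold Gf. rewrite cn_0, dn_0 by auto. destruct Hy0 as [->| ->].
    rewrite sn_K by auto. rewrite Rmult_1_l, Rmult_1_l. apply Rabs_R1.
    rewrite sn_mK by auto. rewrite Rmult_1_l, Rmult_1_l. rewrite Rabs_left by lra. lra. }
  set (M := A + Rabs N / eps).
  assert (HM : A <= M) by (unfold M; pose proof (Rabs_pos N); assert (0 <= Rabs N / eps) by (apply Rdiv_le_0_compat; lra); lra).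
  assert (HT : 0 < Cc / (2 * M)) by (apply Rdiv_lt_0_compat; lra).
  pose proof (dpl_cont _ _ _ _ _ (dpl_D k Hk 0 y0) (mkposreal _ HT)) as [d1 H1].
  destruct (dpl_G 0 y0) as [ga [gb HGd]].
  assert (Hq4 : 0 < 1/4) by lra.
  pose proof (dpl_cont _ _ _ _ _ HGd (mkposreal _ Hq4)) as [d2 H2].
  exists (Rmin (Rmin d1 d2) 2). split. apply Rmin_pos. apply Rmin_pos; apply cond_pos. lra.
  intros [u v] Hne Hz.
  assert (Hu : Rabs (u - 0) < Rmin (Rmin d1 d2) 2).
  { eapply Rle_lt_trans; [|exact Hz]. pose proof (Cmod_re (Cminus (u, v) (0, y0))). unfold Cminus, Re in H. simpl in H.
    replace (u + - 0) with (u - 0) in H by ring. exact H. }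
  assert (Hv : Rabs (v - y0) < Rmin (Rmin d1 d2) 2).
  { eapply Rle_lt_trans; [|exact Hz]. pose proof (Cmod_im (Cminus (u, v) (0, y0))). unfold Cminus, Im in H. simpl in H.
    replace (v + - y0) with (v - y0) in H by ring. exact H. }
  pose proof (Rmin_l (Rmin d1 d2) 2). pose proof (Rmin_r (Rmin d1 d2) 2). pose proof (Rmin_l d1 d2). pose proof (Rmin_r d1 d2).
  specialize (H1 u v ltac:(lra) ltac:(lra)). specialize (H2 u v ltac:(lra) ltac:(lra)). simpl in H1, H2.
  rewrite HD0 in H1.
  assert (HDn : Dd k u v <> 0).
  { intro h. apply Dd_zero in h; auto. destruct h as [hc hs]. apply Hne.
    apply sn_zero_near0 in hs; auto. apply cn_zero_nearK with (y0 := y0) in hc; auto.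
    rewrite hc, hs; reflexivity. all: rewrite ?Rminus_0_r in Hu; lra. }
  assert (HDp : 0 < Dd k u v) by (pose proof (Dd_ge k u v); lra).
  assert (HDs : Dd k u v < Cc / (2 * M)) by (rewrite Rminus_0_r, Rabs_right in H1; lra).
  assert (HG : 3/4 <= Rabs (Gf u v)).
  { pose proof (Rabs_triang_inv (Gf 0 y0) (Gf 0 y0 - Gf u v)). replace (Gf 0 y0 - (Gf 0 y0 - Gf u v)) with (Gf u v) in H5 by ring.
    rewrite Rabs_minus_sym in H5. lra. }
  pose proof (big_w u v HDn HG) as Hw.
  set (w := snC (u, v) k) in *.
  assert (Hw2 : M / Cc < Cmod w ^ 2).
  { eapply Rlt_le_trans; [|exact Hw].
    apply Rmult_lt_reg_r with (2 * Dd k u v * Cc). nra.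
    replace (1 / (2 * Dd k u v) * (2 * Dd k u v * Cc)) with Cc by (field; lra).
    replace (M / Cc * (2 * Dd k u v * Cc)) with (2 * M * Dd k u v) by (field; lra).
    apply Rmult_lt_reg_r with (/ (2 * M)). apply Rinv_0_lt_compat; lra.
    replace (2 * M * Dd k u v * / (2 * M)) with (Dd k u v) by (field; lra). exact HDs. }
  set (q := Cminus (RtoC A) (Cmult (RtoC Cc) (Cmult w w))).
  assert (Hq : Cc * Cmod w ^ 2 - A <= Cmod q).
  { pose proof (Cmod_sub_tri (Cmult (RtoC Cc) (Cmult w w)) (RtoC A) (RtoC 0)).
    replace (Cminus (RtoC A) (RtoC 0)) with (RtoC A) in H5 by (unfold Cminus; ring).
    replace (Cminus (Cmult (RtoC Cc) (Cmult w w)) (RtoC 0)) with (Cmult (RtoC Cc) (Cmult w w)) in H5 by (unfold Cminus; ring).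
    replace (Cminus (Cmult (RtoC Cc) (Cmult w w)) (RtoC A)) with (Copp q) in H5 by (unfold q, Cminus; ring).
    rewrite Cmod_opp in H5. rewrite !Cmod_mult, Cmod_R, Cmod_R in H5. rewrite !Rabs_right in H5 by lra.
    simpl. lra. }
  assert (Hqp : Rabs N / eps < Cmod q).
  { assert (Cc * (M / Cc) < Cc * Cmod w ^ 2) by (apply Rmult_lt_compat_l; lra).
    replace (Cc * (M / Cc)) with M in H5 by (field; lra). unfold M in H5. lra. }
  assert (Hq0 : 0 < Cmod q) by (pose proof (Rabs_pos N); assert (0 <= Rabs N / eps) by (apply Rdiv_le_0_compat; lra); lra).
  assert (Hqn : q <> RtoC 0) by (apply Cmod_gt_0; auto).
  unfold phiG. fold w. fold q.
  replace (Cminus (Cminus (Cdiv (RtoC N) q) (RtoC S)) (RtoC (- S))) with (Cdiv (RtoC N) q)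
    by (rewrite RtoC_opp; unfold Cminus; ring).
  rewrite Cmod_div by auto. rewrite Cmod_R.
  apply Rmult_lt_reg_r with (Cmod q); auto. unfold Rdiv. rewrite Rmult_assoc, Rinv_l, Rmult_1_r by lra.
  apply Rmult_lt_reg_r with (/ eps). apply Rinv_0_lt_compat; lra.
  replace (eps * Cmod q * / eps) with (Cmod q) by (field; lra). exact Hqp.
Qed.

End SNPOLE.

Section LOC.
Variable k : R.
Hypothesis Hk : 0 < k < 1.
Let Hk2 := k2 k Hk.
Let Hkp2 := kp2 k Hk.

Lemma UX_eq x y : UX k x y = cn x k * dn x k * dn y (kp k) * (cn y (kp k) ^ 2 - k ^ 2 * sn x k ^ 2 * sn y (kp k) ^ 2) / Dd k x y ^ 2.
Proof. unfold UX, PPx, Pf, DDx, Dd. unfold Rdiv. f_equal. ring. Qed.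

Lemma UX_nz x y : Dd k x y <> 0 -> cn x k <> 0 -> cn y (kp k) ^ 2 <> k ^ 2 * sn x k ^ 2 * sn y (kp k) ^ 2 -> UX k x y <> 0.
Proof.
  intros HD Hc Hc1. rewrite UX_eq. unfold Rdiv. apply Rmult_integral_contrapositive. split.
  - pose proof (dn_pos x k Hk2). pose proof (dn_pos y (kp k) Hkp2).
    apply Rmult_integral_contrapositive. split; [|lra].
    apply Rmult_integral_contrapositive. split; [|lra].
    apply Rmult_integral_contrapositive. split; lra.
  - apply Rinv_neq_0_compat. apply pow_nonzero. auto.
Qed.

Definition inrect (x y : R) := - ellK k <= x <= ellK k /\ - ellK (kp k) <= y <= ellK (kp k).

Lemma branches x y : inrect x y -> Dd k x y <> 0 -> Uf k x y * Vf k x y = 0 ->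
  (cn x k = 0 /\ 1 <= Uf k x y ^ 2 - Vf k x y ^ 2 <= 1 / k ^ 2) \/
  (y = 0 /\ Uf k x y ^ 2 - Vf k x y ^ 2 = sn x k ^ 2 /\ cn y (kp k) = 1 /\ sn y (kp k) = 0) \/
  (cn y (kp k) = 0 /\ sn x k <> 0 /\ sn y (kp k) ^ 2 = 1 /\ Uf k x y ^ 2 - Vf k x y ^ 2 = 1 / (k ^ 2 * sn x k ^ 2)) \/
  (x = 0 /\ sn x k = 0 /\ cn x k ^ 2 = 1 /\ cn y (kp k) <> 0 /\ Uf k x y ^ 2 - Vf k x y ^ 2 = - (sn y (kp k) ^ 2 / cn y (kp k) ^ 2)).
Proof.
  intros [Hx Hy] HD HUV.
  pose proof (Dd_ge k x y) as HD0. assert (HDp : 0 < Dd k x y) by lra.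
  pose proof (dn_pos x k Hk2) as Hd. pose proof (dn_pos y (kp k) Hkp2) as Hd1.
  pose proof (dn_sq x k Hk2) as Hd2. pose proof (dn_sq y (kp k) Hkp2) as Hd12.
  pose proof (sn_sq x k) as Hs. pose proof (sn_sq y (kp k)) as Hs1. pose proof (kp_sq k Hk) as Hkp.
  unfold Uf, Vf, Pf, Qf in *. set (D := Dd k x y) in *.
  assert (HDe : D = cn y (kp k) ^ 2 + k ^ 2 * sn x k ^ 2 * sn y (kp k) ^ 2) by reflexivity.
  set (s := sn x k) in *. set (c := cn x k) in *. set (d := dn x k) in *.
  set (s1 := sn y (kp k)) in *. set (c1 := cn y (kp k)) in *. set (d1 := dn y (kp k)) in *.
  destruct (Rmult_integral _ _ HUV) as [HU|HV].
  -
    assert (s * d1 = 0).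
    { apply Rmult_eq_reg_r with (/ D). rewrite HU. ring. apply Rinv_neq_0_compat; auto. }
    assert (Hs0 : s = 0) by (destruct (Rmult_integral _ _ H); auto; lra).
    assert (Hx0 : x = 0) by (rewrite (rect_sn x 0 k Hk2 Hx Hs0); apply pt_0; auto).
    right; right; right. split; auto. split; auto. split. rewrite Hs0 in Hs; lra.
    assert (Hc1 : c1 <> 0). { intro h. apply HD. rewrite HDe, h, Hs0. ring. }
    split; auto.
    rewrite HU. assert (Hc2 : c ^ 2 = 1) by (rewrite Hs0 in Hs; lra).
    assert (Hdd : d ^ 2 = 1) by (rewrite Hd2, Hs0; ring).
    rewrite HDe, Hs0.
    replace (0 ^ 2 - (c * d * s1 * c1 * / (c1 ^ 2 + k ^ 2 * 0 ^ 2 * s1 ^ 2)) ^ 2) with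
      (- (c ^ 2 * d ^ 2 * s1 ^ 2 * c1 ^ 2 / (c1 ^ 2) ^ 2)) by (field; auto).
    rewrite Hc2, Hdd. field. auto.
  -
    assert (c * d * s1 * c1 = 0).
    { apply Rmult_eq_reg_r with (/ D). rewrite HV. ring. apply Rinv_neq_0_compat; auto. }
    rewrite HV. 
    destruct (Rmult_integral _ _ H) as [H1|Hc1]; [destruct (Rmult_integral _ _ H1) as [H2|Hs10];
       [destruct (Rmult_integral _ _ H2) as [Hc0|Hd0]|]|].
    +
      left. split; auto.
      assert (Hss : s ^ 2 = 1) by (rewrite Hc0 in Hs; lra).
      assert (HDd : D = d1 ^ 2) by (rewrite HDe, Hd12, Hss, Hkp; nra).
      assert (Hd1b : k ^ 2 <= d1 ^ 2 <= 1).
      { rewrite Hd12, Hkp. pose proof (pow2_ge_0 s1). pose proof (pow2_ge_0 c1). pose proof (pow2_ge_0 k). split; nra. }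
      replace ((s * d1 * / D) ^ 2 - 0 ^ 2) with (s ^ 2 * d1 ^ 2 / D ^ 2) by (field; auto).
      rewrite Hss, HDd. replace (1 * d1 ^ 2 / (d1 ^ 2) ^ 2) with (1 / d1 ^ 2) by (field; lra).
      split.
      * apply Rmult_le_reg_r with (d1 ^ 2). lra. unfold Rdiv. rewrite Rmult_assoc, Rinv_l by lra. lra.
      * unfold Rdiv. rewrite !Rmult_1_l. apply Rinv_le_contravar; lra.
    + lra.
    +
      right; left.
      assert (Hy0 : y = 0) by (rewrite (rect_sn y 0 (kp k) Hkp2 Hy Hs10); apply pt_0; auto).
      assert (Hc1 : c1 = 1) by (unfold c1; rewrite Hy0; apply cn_0; auto).
      assert (Hd11 : d1 = 1) by (unfold d1; rewrite Hy0; apply dn_0; auto).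
      split; auto. split; [|split; auto].
      rewrite HDe, Hc1, Hs10, Hd11. field.
    +
      right; right; left.
      assert (Hs11 : s1 ^ 2 = 1) by (rewrite Hc1 in Hs1; lra).
      assert (Hsn : s <> 0) by (intro h; apply HD; rewrite HDe, h, Hc1; ring).
      assert (Hdk : d1 ^ 2 = k ^ 2) by (rewrite Hd12, Hs11, Hkp; ring).
      split; auto. split; auto. split; auto.
      rewrite HDe, Hc1, Hs11.
      replace ((s * d1 * / (0 ^ 2 + k ^ 2 * s ^ 2 * 1)) ^ 2 - 0 ^ 2)
        with (s ^ 2 * d1 ^ 2 / (k ^ 2 * s ^ 2) ^ 2).
      rewrite Hdk. field. split; auto. lra.
      field. split; auto. lra.
Qed.

End LOC.

Lemma ww_real (U V : R) : U * V = 0 -> Cmult (U, V) (U, V) = RtoC (U ^ 2 - V ^ 2).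
Proof. intros H. unfold Cmult, RtoC. simpl. f_equal; nra. Qed.

Lemma ww_eq (U V r : R) : Cmult (U, V) (U, V) = RtoC r -> U * V = 0 /\ U ^ 2 - V ^ 2 = r.
Proof. unfold Cmult, RtoC. simpl. intros H. injection H. intros. split; nra. Qed.

Section MAIN.
Variables z1 z2 z3 : R.
Hypothesis h3 : 0 < z3.
Hypothesis h32 : z3 < z2.
Hypothesis h21 : z2 < z1.

Definition kk := sqrt ((z1 ^ 2 - z2 ^ 2) / (z1 ^ 2 - z3 ^ 2)).
Definition NN := 2 * (z1 + z3) * (z2 + z3).
Definition AA := z1 + z3.
Definition CC := z1 - z2.
Definition SS := z1 + z2 + z3.
Definition cz := (SS * AA - NN) / (SS * CC).
Definition cpole := AA / CC.
Definition ww := fun z => snC z kk.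
Definition phi := phiG NN AA CC SS ww.

Lemma kk_sq : kk ^ 2 = (z1 ^ 2 - z2 ^ 2) / (z1 ^ 2 - z3 ^ 2).
Proof.
  unfold kk. rewrite <- Rsqr_pow2, Rsqr_sqrt. auto.
  apply Rdiv_le_0_compat; nra.
Qed.

Lemma kk_range : 0 < kk < 1.
Proof.
  assert (H : 0 < (z1 ^ 2 - z2 ^ 2) / (z1 ^ 2 - z3 ^ 2) < 1).
  { split. apply Rdiv_lt_0_compat; nra.
    apply Rmult_lt_reg_r with (z1 ^ 2 - z3 ^ 2). nra. unfold Rdiv. rewrite Rmult_assoc, Rinv_l by nra. nra. }
  split. unfold kk. apply sqrt_lt_R0. lra.
  unfold kk. apply Rlt_le_trans with (sqrt 1); [apply sqrt_lt_1_alt; lra | rewrite sqrt_1; lra].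
Qed.

Lemma pos_consts : 0 < NN /\ 0 < AA /\ 0 < CC /\ 0 < SS.
Proof. unfold NN, AA, CC, SS. repeat split; nra. Qed.

Lemma sq_facts : 0 < z1 ^ 2 - z2 ^ 2 /\ 0 < z1 ^ 2 - z3 ^ 2 /\ 0 < z1 - z2 /\ 0 < z1 + z2 + z3.
Proof. repeat split; nra. Qed.

Ltac fsc := pose proof sq_facts; repeat split; lra.

Lemma cpole_gt : 1 / kk ^ 2 < cpole.
Proof.
  rewrite kk_sq. unfold cpole, AA, CC.
  replace (1 / ((z1 ^ 2 - z2 ^ 2) / (z1 ^ 2 - z3 ^ 2))) with ((z1 ^ 2 - z3 ^ 2) / (z1 ^ 2 - z2 ^ 2)) by (field; fsc).
  apply Rmult_lt_reg_r with ((z1 ^ 2 - z2 ^ 2) * (z1 - z2)). pose proof sq_facts; apply Rmult_lt_0_compat; lra.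
  replace ((z1 ^ 2 - z3 ^ 2) / (z1 ^ 2 - z2 ^ 2) * ((z1 ^ 2 - z2 ^ 2) * (z1 - z2))) with ((z1 ^ 2 - z3 ^ 2) * (z1 - z2)) by (field; fsc).
  replace ((z1 + z3) / (z1 - z2) * ((z1 ^ 2 - z2 ^ 2) * (z1 - z2))) with ((z1 + z3) * (z1 ^ 2 - z2 ^ 2)) by (field; fsc).
  replace ((z1 ^ 2 - z3 ^ 2) * (z1 - z2)) with (((z1 + z3) * (z1 - z2)) * (z1 - z3)) by ring.
  replace ((z1 + z3) * (z1 ^ 2 - z2 ^ 2)) with (((z1 + z3) * (z1 - z2)) * (z1 + z2)) by ring.
  apply Rmult_lt_compat_l. apply Rmult_lt_0_compat; lra. lra.
Qed.

Lemma invk_ge1 : 1 <= 1 / kk ^ 2.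
Proof.
  pose proof kk_range. assert (0 < kk ^ 2 <= 1) by nra.
  apply Rmult_le_reg_r with (kk ^ 2). lra. unfold Rdiv. rewrite Rmult_assoc, Rinv_l by lra. lra.
Qed.

Lemma cz_lt1 : cz < 1.
Proof.
  unfold cz, SS, AA, NN, CC. apply Rmult_lt_reg_r with ((z1 + z2 + z3) * (z1 - z2)). nra.
  unfold Rdiv. rewrite Rmult_assoc, Rinv_l by nra. nra.
Qed.

Lemma cz_formula : cz = (z1 + z3) * (z1 - z2 - z3) / ((z1 - z2) * (z1 + z2 + z3)).
Proof. unfold cz, SS, AA, NN, CC. field. fsc. Qed.

Lemma cz_pos : z1 > z2 + z3 -> 0 < cz.
Proof. intros. rewrite cz_formula. apply Rdiv_lt_0_compat; nra. Qed.

Lemma cz_mul : cz * ((z1 - z2) * (z1 + z2 + z3)) = (z1 + z3) * (z1 - z2 - z3).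
Proof. rewrite cz_formula. field. fsc. Qed.

Lemma cz_neg : z1 < z2 + z3 -> cz < 0.
Proof. intros. pose proof cz_mul. assert (0 < (z1 - z2) * (z1 + z2 + z3)) by nra. nra. Qed.

Lemma cz_zero : z1 = z2 + z3 -> cz = 0.
Proof. intros. rewrite cz_formula. replace (z1 - z2 - z3) with 0 by lra. unfold Rdiv. ring. Qed.

Let Hk := kk_range.
Let Hk2 := k2 kk kk_range.
Let Hkp2 := kp2 kk kk_range.

Definition q0 (z : C) := Cminus (RtoC AA) (Cmult (RtoC CC) (Cmult (ww z) (ww z))).

Lemma w_eq x y : Dd kk x y <> 0 -> ww (x, y) = (Uf kk x y, Vf kk x y).
Proof. intros. unfold ww. apply snC_eq; auto. Qed.

Lemma pole_iff x y : Dd kk x y <> 0 -> q0 (x, y) = RtoC 0 ->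
  Uf kk x y * Vf kk x y = 0 /\ Uf kk x y ^ 2 - Vf kk x y ^ 2 = cpole.
Proof.
  intros HD Hq. apply ww_eq. rewrite <- (w_eq x y HD).
  destruct pos_consts as [HN [HA [HC HS]]].
  unfold q0 in Hq. unfold cpole. rewrite RtoC_div by lra.
  apply Ceq_minus in Hq.
  rewrite Hq. field. apply RtoC_nz; lra.
Qed.

Lemma zero_iff x y : Dd kk x y <> 0 -> q0 (x, y) <> RtoC 0 ->
  Cminus (Cdiv (RtoC NN) (q0 (x, y))) (RtoC SS) = RtoC 0 ->
  Uf kk x y * Vf kk x y = 0 /\ Uf kk x y ^ 2 - Vf kk x y ^ 2 = cz.
Proof.
  intros HD Hq Hp. apply ww_eq. rewrite <- (w_eq x y HD).
  destruct pos_consts as [HN [HA [HC HS]]].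
  apply Ceq_minus in Hp.
  assert (E : RtoC NN = Cmult (RtoC SS) (q0 (x, y))).
  { rewrite <- Hp. field. auto. }
  unfold q0 in E. unfold cz. rewrite RtoC_div by (apply Rgt_not_eq; apply Rmult_lt_0_compat; lra).
  rewrite RtoC_minus, !RtoC_mult, E. field. split; apply RtoC_nz; lra.
Qed.

Lemma regime_pole x y c0 : inrect kk x y -> Dd kk x y <> 0 ->
  Uf kk x y * Vf kk x y = 0 -> Uf kk x y ^ 2 - Vf kk x y ^ 2 = c0 -> 1 / kk ^ 2 < c0 ->
  UX kk x y <> 0 /\ sn x kk ^ 2 = 1 / (kk ^ 2 * c0) /\ cn y (kp kk) = 0 /\ (y = ellK (kp kk) \/ y = - ellK (kp kk)).
Proof.
  intros Hr HD HUV Hc0 Hlt. pose proof invk_ge1.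
  destruct (branches kk Hk x y Hr HD HUV) as [[_ B]|[[_ [B _]]|[[Hc1 [Hs [Hs1 B]]]|[_ [_ [_ [Hc1n B]]]]]]].
  - lra.
  - pose proof (sn_sq x kk). pose proof (pow2_ge_0 (cn x kk)). lra.
  - rewrite Hc0 in B. pose proof (pow2_ge_0 (sn x kk)).
    assert (Hs2 : 0 < sn x kk ^ 2) by (apply pow2_gt_0; auto).
    assert (E : sn x kk ^ 2 = 1 / (kk ^ 2 * c0)).
    { rewrite B. field. repeat split; try lra; auto. }
    split; [|split; [auto|split; auto]].
    + apply UX_nz; auto.
      * intro hc. pose proof (sn_sq x kk). rewrite hc in H1.
        assert (sn x kk ^ 2 = 1) by lra. rewrite H2 in B.
        assert (c0 = 1 / kk ^ 2) by (rewrite B; field; lra). lra.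
      * rewrite Hc1, Hs1. intro h. assert (kk ^ 2 * sn x kk ^ 2 = 0) by lra.
        assert (0 < kk ^ 2) by (apply pow2_gt_0; lra). nra.
    + destruct Hr as [_ Hy]. destruct (rect_sn_sq y 1 (kp kk) Hkp2 Hy ltac:(lra)) as [h|h];
      rewrite pt_1 in h; auto.
  - pose proof (pow2_ge_0 (sn y (kp kk))). pose proof (pow2_gt_0 (cn y (kp kk)) Hc1n).
    assert (0 <= sn y (kp kk) ^ 2 / cn y (kp kk) ^ 2) by (apply Rdiv_le_0_compat; auto).
    lra.
Qed.

Lemma B3_ge1 x : sn x kk <> 0 -> 1 <= 1 / (kk ^ 2 * sn x kk ^ 2).
Proof.
  intros Hs. pose proof (sn_sq x kk). pose proof (pow2_ge_0 (cn x kk)).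
  assert (0 < sn x kk ^ 2) by (apply pow2_gt_0; auto). assert (0 < kk ^ 2 < 1) by (split; [apply pow2_gt_0; lra| exact Hk2]).
  assert (0 < kk ^ 2 * sn x kk ^ 2 <= 1) by (split; [apply Rmult_lt_0_compat; lra | nra]).
  apply Rmult_le_reg_r with (kk ^ 2 * sn x kk ^ 2). lra. unfold Rdiv. rewrite Rmult_assoc, Rinv_l by lra. lra.
Qed.

Lemma B4_le0 y : cn y (kp kk) <> 0 -> - (sn y (kp kk) ^ 2 / cn y (kp kk) ^ 2) <= 0.
Proof.
  intros Hc. pose proof (pow2_ge_0 (sn y (kp kk))). pose proof (pow2_gt_0 (cn y (kp kk)) Hc).
  assert (0 <= sn y (kp kk) ^ 2 / cn y (kp kk) ^ 2) by (apply Rdiv_le_0_compat; auto). lra.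
Qed.

Lemma regime_zpos x y c0 : inrect kk x y -> Dd kk x y <> 0 ->
  Uf kk x y * Vf kk x y = 0 -> Uf kk x y ^ 2 - Vf kk x y ^ 2 = c0 -> 0 < c0 < 1 ->
  UX kk x y <> 0 /\ y = 0 /\ sn x kk ^ 2 = c0.
Proof.
  intros Hr HD HUV Hc0 Hlt.
  destruct (branches kk Hk x y Hr HD HUV) as [[_ B]|[[Hy0 [B [Hc1 Hs10]]]|[[Hc1 [Hs [Hs1 B]]]|[_ [_ [_ [Hc1n B]]]]]]].
  - lra.
  - split; [|split; auto; lra].
    apply UX_nz; auto.
    + intro hc. pose proof (sn_sq x kk). rewrite hc in H. lra.
    + rewrite Hc1, Hs10. intro h. ring_simplify in h. lra.
  - pose proof (B3_ge1 x Hs). lra.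
  - pose proof (B4_le0 y Hc1n). lra.
Qed.

Lemma regime_zneg x y c0 : inrect kk x y -> Dd kk x y <> 0 ->
  Uf kk x y * Vf kk x y = 0 -> Uf kk x y ^ 2 - Vf kk x y ^ 2 = c0 -> c0 < 0 ->
  UX kk x y <> 0 /\ x = 0 /\ sn y (kp kk) ^ 2 = - c0 / (1 - c0).
Proof.
  intros Hr HD HUV Hc0 Hlt.
  destruct (branches kk Hk x y Hr HD HUV) as [[_ B]|[[Hy0 [B [Hc1 Hs10]]]|[[Hc1 [Hs [Hs1 B]]]|[Hx0 [Hs0 [Hc2 [Hc1n B]]]]]]].
  - lra.
  - pose proof (pow2_ge_0 (sn x kk)). lra.
  - pose proof (B3_ge1 x Hs). lra.
  - split; [|split; auto].
    + apply UX_nz; auto.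
      * intro hc. rewrite hc in Hc2. lra.
      * rewrite Hs0. intro h. apply Hc1n. apply sq_zero. rewrite h. ring.
    + pose proof (sn_sq y (kp kk)). rewrite B in Hc0.
      assert (0 < cn y (kp kk) ^ 2) by (apply pow2_gt_0; auto).
      assert (c0 * cn y (kp kk) ^ 2 = - sn y (kp kk) ^ 2).
      { rewrite <- Hc0. field. auto. }
      apply Rmult_eq_reg_r with (1 - c0). 2: lra. unfold Rdiv. rewrite Rmult_assoc, Rinv_l by lra. nra.
Qed.

Lemma regime_z0 x y : inrect kk x y -> Dd kk x y <> 0 ->
  Uf kk x y * Vf kk x y = 0 -> Uf kk x y ^ 2 - Vf kk x y ^ 2 = 0 ->
  UX kk x y <> 0 /\ x = 0 /\ y = 0.
Proof.
  intros Hr HD HUV Hc0. pose proof Hr as [Hx Hy].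
  destruct (branches kk Hk x y Hr HD HUV) as [[_ B]|[[Hy0 [B [Hc1 Hs10]]]|[[Hc1 [Hs [Hs1 B]]]|[Hx0 [Hs0 [Hc2 [Hc1n B]]]]]]].
  - lra.
  - assert (Hs0 : sn x kk = 0) by (apply sq_zero; lra).
    assert (Hx0 : x = 0) by (rewrite (rect_sn x 0 kk Hk2 Hx Hs0); apply pt_0; auto).
    split; [|split; auto].
    apply UX_nz; auto.
    + intro hc. pose proof (sn_sq x kk). rewrite hc, Hs0 in H. lra.
    + rewrite Hc1, Hs10. intro h. ring_simplify in h. lra.
  - pose proof (B3_ge1 x Hs). lra.
  - assert (Hs10 : sn y (kp kk) = 0).
    { apply sq_zero. assert (0 < cn y (kp kk) ^ 2) by (apply pow2_gt_0; auto).
      assert (sn y (kp kk) ^ 2 / cn y (kp kk) ^ 2 = 0) by lra.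
      apply Rmult_eq_reg_r with (/ cn y (kp kk) ^ 2). rewrite Rmult_0_l. exact H0.
      apply Rinv_neq_0_compat; lra. }
    assert (Hy0 : y = 0) by (rewrite (rect_sn y 0 (kp kk) Hkp2 Hy Hs10); apply pt_0; auto).
    split; [|split; auto].
    apply UX_nz; auto.
    + intro hc. rewrite hc in Hc2. lra.
    + rewrite Hs0. intro h. apply Hc1n. apply sq_zero. rewrite h. ring.
Qed.

Definition phi0 (z : C) := Cminus (Cdiv (RtoC NN) (q0 z)) (RtoC SS).

Lemma phi_unfold : phi = fun z => Cminus (Cdiv (RtoC NN) (q0 z)) (RtoC SS).
Proof. reflexivity. Qed.

Lemma sn_pole_case x y : inrect kk x y -> Dd kk x y = 0 -> x = 0 /\ (y = ellK (kp kk) \/ y = - ellK (kp kk)).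
Proof.
  intros [Hx Hy] HD. destruct (Dd_zero kk Hk x y HD) as [Hc1 Hs].
  split. rewrite (rect_sn x 0 kk Hk2 Hx Hs); apply pt_0; auto.
  pose proof (sn_sq y (kp kk)). rewrite Hc1 in H.
  destruct (rect_sn_sq y 1 (kp kk) Hkp2 Hy ltac:(lra)) as [h|h]; rewrite pt_1 in h; auto.
Qed.

Lemma phi_snpole x y : inrect kk x y -> Dd kk x y = 0 -> CL phi (x, y) (RtoC (- SS)).
Proof.
  intros Hr HD. destruct (sn_pole_case x y Hr HD) as [-> Hy].
  destruct pos_consts as [HN [HA [HC HS]]].
  apply (snpole_lim kk Hk); auto.
Qed.

Lemma phi_reg x y : Dd kk x y <> 0 -> q0 (x, y) <> RtoC 0 -> CL phi (x, y) (phi0 (x, y)).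
Proof.
  intros HD Hq. unfold phi, phi0, q0. apply CL_phi_reg; auto.
  apply (snC_cont kk Hk); auto.
Qed.

Lemma l_nz (a b : R) : a <> 0 -> (a, b) <> RtoC 0.
Proof. intros H h. injection h. auto. Qed.

Lemma SS_nz : RtoC (- SS) <> RtoC 0.
Proof. destruct pos_consts as [_ [_ [_ HS]]]. apply RtoC_nz. lra. Qed.

Lemma order_pole_pt x y : inrect kk x y -> Dd kk x y <> 0 -> q0 (x, y) = RtoC 0 -> order_at phi (x, y) (-1).
Proof.
  intros Hr HD Hq. destruct pos_consts as [HN [HA [HC HS]]].
  destruct (pole_iff x y HD Hq) as [HUV Hc].
  destruct (regime_pole x y cpole Hr HD HUV Hc cpole_gt) as [HUX _].
  apply (ord_pole NN AA CC SS ww (x, y) (UX kk x y, - UY kk x y)).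
  - apply (snC_CD kk Hk); auto.
  - apply l_nz; auto.
  - intro h. unfold q0 in Hq. rewrite h in Hq. apply (RtoC_nz AA); [lra|]. rewrite <- Hq. ring.
  - exact Hq.
  - lra.
  - lra.
Qed.

Lemma w0_nz x y : Dd kk x y <> 0 -> Uf kk x y ^ 2 - Vf kk x y ^ 2 <> 0 -> ww (x, y) <> RtoC 0.
Proof.
  intros HD Hc h. rewrite w_eq in h by auto. injection h. intros h1 h2. apply Hc. rewrite h1, h2. ring.
Qed.

Lemma order_zero_pt x y : inrect kk x y -> Dd kk x y <> 0 -> q0 (x, y) <> RtoC 0 -> phi0 (x, y) = RtoC 0 ->
  cz <> 0 -> order_at phi (x, y) 1.
Proof.
  intros Hr HD Hq Hp Hcz. destruct pos_consts as [HN [HA [HC HS]]].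
  destruct (zero_iff x y HD Hq Hp) as [HUV Hc].
  assert (HUX : UX kk x y <> 0).
  { destruct (Rtotal_order cz 0) as [hn|[he|hp]].
    - apply (regime_zneg x y cz Hr HD HUV Hc hn).
    - contradiction.
    - apply (regime_zpos x y cz Hr HD HUV Hc (conj hp cz_lt1)). }
  apply (ord_zero1 NN AA CC SS ww (x, y) (UX kk x y, - UY kk x y)).
  - apply (snC_CD kk Hk); auto.
  - apply l_nz; auto.
  - apply w0_nz; auto. lra.
  - exact Hq.
  - unfold phi0 in Hp. apply Ceq_minus in Hp. fold (q0 (x, y)). rewrite <- Hp. field. auto.
  - lra.
  - lra.
Qed.

Lemma order_zero2_pt x y : inrect kk x y -> Dd kk x y <> 0 -> q0 (x, y) <> RtoC 0 -> phi0 (x, y) = RtoC 0 ->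
  cz = 0 -> order_at phi (x, y) 2.
Proof.
  intros Hr HD Hq Hp Hcz. destruct pos_consts as [HN [HA [HC HS]]].
  destruct (zero_iff x y HD Hq Hp) as [HUV Hc]. rewrite Hcz in Hc.
  destruct (regime_z0 x y Hr HD HUV Hc) as [HUX _].
  apply (ord_zero2 NN AA CC SS ww (x, y) (UX kk x y, - UY kk x y)).
  - apply (snC_CD kk Hk); auto.
  - apply l_nz; auto.
  - rewrite w_eq by auto. assert (Uf kk x y = 0 /\ Vf kk x y = 0) as [h1 h2].
    { destruct (Rmult_integral _ _ HUV) as [h|h]; rewrite h in Hc; split; auto; apply sq_zero; lra. }
    rewrite h1, h2. reflexivity.
  - lra.
  - unfold cz in Hcz. assert (SS * AA - NN = 0).
    { apply Rmult_eq_reg_r with (/ (SS * CC)). rewrite Rmult_0_l. exact Hcz.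
      apply Rinv_neq_0_compat. apply Rgt_not_eq. apply Rmult_lt_0_compat; lra. }
    lra.
  - lra.
  - lra.
Qed.

Lemma rect_conv z : in_rect (ellK kk) (ellK (cmod kk)) z -> inrect kk (Re z) (Im z).
Proof. unfold in_rect, inrect. auto. Qed.

Lemma part1 z : in_rect (ellK kk) (ellK (cmod kk)) z -> exists m, order_at phi z m.
Proof.
  intros Hr. apply rect_conv in Hr. destruct z as [x y]. simpl in Hr.
  destruct (Req_dec (Dd kk x y) 0) as [HD|HD].
  - exists 0%Z. eapply ord_limit0. apply phi_snpole; auto. apply SS_nz.
  - destruct (Ceq_dec (q0 (x, y)) (RtoC 0)) as [Hq|Hq].
    + exists (-1)%Z. apply order_pole_pt; auto.
    + destruct (Ceq_dec (phi0 (x, y)) (RtoC 0)) as [Hp|Hp].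
      * destruct (Req_dec cz 0) as [hc|hc].
        -- exists 2%Z. apply order_zero2_pt; auto.
        -- exists 1%Z. apply order_zero_pt; auto.
      * exists 0%Z. eapply ord_limit0. apply phi_reg; auto. exact Hp.
Qed.

Lemma pole_only z m : in_rect (ellK kk) (ellK (cmod kk)) z -> order_at phi z m -> (m < 0)%Z ->
  Dd kk (Re z) (Im z) <> 0 /\ q0 z = RtoC 0.
Proof.
  intros Hr Ho Hm. apply rect_conv in Hr. destruct z as [x y]. simpl in *.
  destruct (Req_dec (Dd kk x y) 0) as [HD|HD].
  - exfalso. eapply order_neg_nolimit; eauto. apply phi_snpole; auto.
  - split; auto. destruct (Ceq_dec (q0 (x, y)) (RtoC 0)) as [Hq|Hq]; auto.
    exfalso. eapply order_neg_nolimit; eauto. apply phi_reg; auto.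
Qed.

Lemma zero_only z m : in_rect (ellK kk) (ellK (cmod kk)) z -> order_at phi z m -> (0 < m)%Z ->
  Dd kk (Re z) (Im z) <> 0 /\ q0 z <> RtoC 0 /\ phi0 z = RtoC 0.
Proof.
  intros Hr Ho Hm. apply rect_conv in Hr. destruct z as [x y]. simpl in *.
  pose proof (order_pos_zero _ _ _ Ho Hm) as H0.
  destruct (Req_dec (Dd kk x y) 0) as [HD|HD].
  - exfalso. apply SS_nz. apply (CL_unique phi (x, y)). apply phi_snpole; auto. exact H0.
  - destruct (Ceq_dec (q0 (x, y)) (RtoC 0)) as [Hq|Hq].
    + exfalso. eapply ord_m1_pos. apply order_pole_pt; eauto. exact Ho. exact Hm.
    + split; auto. split; auto. apply (CL_unique phi (x, y)). apply phi_reg; auto. exact H0.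
Qed.

Lemma vals_c1zero x y : cn y (kp kk) = 0 -> sn y (kp kk) ^ 2 = 1 -> sn x kk <> 0 ->
  Dd kk x y <> 0 /\ Uf kk x y * Vf kk x y = 0 /\ Uf kk x y ^ 2 - Vf kk x y ^ 2 = 1 / (kk ^ 2 * sn x kk ^ 2).
Proof.
  intros Hc1 Hs1 Hs.
  assert (HD : Dd kk x y = kk ^ 2 * sn x kk ^ 2) by (unfold Dd; rewrite Hc1, Hs1; ring).
  assert (HDn : kk ^ 2 * sn x kk ^ 2 <> 0) by (apply Rmult_integral_contrapositive; split; apply pow_nonzero; lra).
  assert (Hd1 : dn y (kp kk) ^ 2 = kk ^ 2) by (rewrite dn_sq, Hs1, (kp_sq kk Hk) by auto; ring).
  assert (HV : Vf kk x y = 0) by (unfold Vf, Qf; rewrite Hc1; ring).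
  split. rewrite HD; auto. split. rewrite HV; ring.
  rewrite HV. unfold Uf, Pf. rewrite HD.
  replace ((sn x kk * dn y (kp kk) * / (kk ^ 2 * sn x kk ^ 2)) ^ 2 - 0 ^ 2) with
    (sn x kk ^ 2 * dn y (kp kk) ^ 2 / (kk ^ 2 * sn x kk ^ 2) ^ 2) by (field; repeat split; try lra; auto).
  rewrite Hd1. field. repeat split; try lra; auto.
Qed.

Lemma vals_y0 x : Dd kk x 0 <> 0 /\ Uf kk x 0 * Vf kk x 0 = 0 /\ Uf kk x 0 ^ 2 - Vf kk x 0 ^ 2 = sn x kk ^ 2.
Proof.
  assert (HD : Dd kk x 0 = 1) by (unfold Dd; rewrite cn_0, sn_0 by auto; ring).
  assert (HV : Vf kk x 0 = 0) by (unfold Vf, Qf; rewrite sn_0 by auto; ring).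
  assert (HU : Uf kk x 0 = sn x kk) by (unfold Uf, Pf; rewrite HD, dn_0 by auto; field).
  rewrite HD, HV, HU. split. lra. split; ring.
Qed.

Lemma vals_x0 y : cn y (kp kk) <> 0 ->
  Dd kk 0 y <> 0 /\ Uf kk 0 y * Vf kk 0 y = 0 /\ Uf kk 0 y ^ 2 - Vf kk 0 y ^ 2 = - (sn y (kp kk) ^ 2 / cn y (kp kk) ^ 2).
Proof.
  intros Hc.
  assert (HD : Dd kk 0 y = cn y (kp kk) ^ 2) by (unfold Dd; rewrite sn_0 by auto; ring).
  assert (HU : Uf kk 0 y = 0) by (unfold Uf, Pf; rewrite sn_0 by auto; ring).
  assert (HV : Vf kk 0 y = sn y (kp kk) / cn y (kp kk)) by (unfold Vf, Qf; rewrite HD, cn_0, dn_0 by auto; field; auto).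
  rewrite HD, HU, HV. split. apply pow_nonzero; auto. split. ring. field. auto.
Qed.

Lemma q0_real x y : Dd kk x y <> 0 -> Uf kk x y * Vf kk x y = 0 ->
  q0 (x, y) = RtoC (AA - CC * (Uf kk x y ^ 2 - Vf kk x y ^ 2)).
Proof.
  intros HD HUV. unfold q0. rewrite w_eq by auto. rewrite ww_real by auto.
  unfold Cminus, Cplus, Copp, Cmult, RtoC; simpl; f_equal; ring.
Qed.

Lemma pole_cond x y : Dd kk x y <> 0 -> Uf kk x y * Vf kk x y = 0 -> Uf kk x y ^ 2 - Vf kk x y ^ 2 = cpole ->
  q0 (x, y) = RtoC 0.
Proof.
  intros HD HUV Hc. rewrite q0_real by auto. rewrite Hc. unfold cpole.
  destruct pos_consts as [HN [HA [HC HS]]]. f_equal. field. lra.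
Qed.

Lemma zero_cond x y : Dd kk x y <> 0 -> Uf kk x y * Vf kk x y = 0 -> Uf kk x y ^ 2 - Vf kk x y ^ 2 = cz ->
  q0 (x, y) <> RtoC 0 /\ phi0 (x, y) = RtoC 0.
Proof.
  intros HD HUV Hc. destruct pos_consts as [HN [HA [HC HS]]].
  assert (E : AA - CC * cz = NN / SS) by (unfold cz; field; lra).
  unfold phi0. rewrite q0_real by auto. rewrite Hc, E.
  split. apply RtoC_nz. apply Rgt_not_eq. apply Rdiv_lt_0_compat; lra.
  rewrite <- RtoC_div by (apply Rgt_not_eq, Rdiv_lt_0_compat; lra). rewrite <- RtoC_minus.
  f_equal. field. lra.
Qed.

Lemma int_between (m : Z) (K a : R) : 0 < K -> 0 < a < K -> a = IZR m * K -> False.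
Proof.
  intros HK Ha E. destruct (Z_lt_le_dec m 1) as [h|h].
  - assert (IZR m <= 0) by (apply IZR_le; lia). nra.
  - assert (1 <= IZR m) by (apply IZR_le; lia). nra.
Qed.

Lemma lat_mk (x y x' y' K K' : R) (m n : Z) :
  x - x' = 2 * IZR m * K -> y - y' = 2 * IZR n * K' -> lat_eq K K' (x, y) (x', y').
Proof.
  intros h1 h2. exists m, n. unfold Cminus, Cplus, Copp. simpl. f_equal; lra.
Qed.

Lemma lat_fst K K' (a b c d : R) : lat_eq K K' (a, b) (c, d) -> exists m : Z, a - c = 2 * IZR m * K.
Proof.
  intros [m [n E]]. exists m. apply (f_equal fst) in E. unfold Cminus, Cplus, Copp in E. simpl in E. lra.
Qed.

Lemma lat_snd K K' (a b c d : R) : lat_eq K K' (a, b) (c, d) -> exists n : Z, b - d = 2 * IZR n * K'.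
Proof.
  intros [m [n E]]. exists n. apply (f_equal snd) in E. unfold Cminus, Cplus, Copp in E. simpl in E. lra.
Qed.

Lemma Kpos : 0 < ellK kk.
Proof. apply ellK_pos; auto. Qed.
Lemma Kppos : 0 < ellK (kp kk).
Proof. apply ellK_pos; auto. Qed.

Lemma sqrt_sq_facts (r : R) : 0 < r < 1 -> 0 < sqrt r < 1 /\ sqrt r ^ 2 = r.
Proof.
  intros Hr. split. split. apply sqrt_lt_R0; lra.
  apply Rlt_le_trans with (sqrt 1); [apply sqrt_lt_1_alt; lra | rewrite sqrt_1; lra].
  rewrite <- Rsqr_pow2, Rsqr_sqrt; lra.
Qed.

Lemma part2 : exists alpha : R,
     0 < alpha < ellK kk /\ sn alpha kk = sqrt ((z1 - z3) / (z1 + z2)) /\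
     let p : C := (alpha, ellK (cmod kk)) in
     order_at phi p (-1) /\ order_at phi (Copp p) (-1) /\
     ~ lat_eq (ellK kk) (ellK (cmod kk)) p (Copp p) /\
     (forall z m, in_rect (ellK kk) (ellK (cmod kk)) z -> order_at phi z m -> (m < 0)%Z ->
        lat_eq (ellK kk) (ellK (cmod kk)) z p \/ lat_eq (ellK kk) (ellK (cmod kk)) z (Copp p)).
Proof.
  set (r := (z1 - z3) / (z1 + z2)).
  assert (Hr : 0 < r < 1).
  { unfold r. split. apply Rdiv_lt_0_compat; lra.
    apply Rmult_lt_reg_r with (z1 + z2). lra. unfold Rdiv. rewrite Rmult_assoc, Rinv_l by lra. lra. }
  destruct (sqrt_sq_facts r Hr) as [Hv Hv2].
  set (v := sqrt r) in *.
  assert (Hcp : 1 / (kk ^ 2 * v ^ 2) = cpole).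
  { rewrite Hv2, kk_sq. unfold r, cpole, AA, CC. field. fsc. }
  pose proof Kpos as HK. pose proof Kppos as HK'.
  assert (Hsa : sn (pt v kk) kk = v) by (apply pt_sn; auto; lra).
  assert (Hsma : sn (- pt v kk) kk = - v) by (rewrite <- pt_opp by auto; apply pt_sn; auto; lra).
  pose proof (pt_range v kk Hk2 Hv) as Hra.
  exists (pt v kk). split; auto. split; auto.
  intros p. change (cmod kk) with (kp kk) in *. unfold p.
  split; [|split; [|split]].
  - apply order_pole_pt.
    + split; split; lra.
    + destruct (vals_c1zero (pt v kk) (ellK (kp kk))) as [HD _]; auto.
      apply cn_K; auto. rewrite sn_K by auto; ring. rewrite Hsa; lra.
    + destruct (vals_c1zero (pt v kk) (ellK (kp kk))) as [HD [HUV Hc]]; auto.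
      apply cn_K; auto. rewrite sn_K by auto; ring. rewrite Hsa; lra.
      apply pole_cond; auto. rewrite Hc, Hsa. auto.
  - change (Copp (pt v kk, ellK (kp kk))) with ((- pt v kk, - ellK (kp kk)) : C).
    assert (Hc1 : cn (- ellK (kp kk)) (kp kk) = 0) by (apply cn_mK; auto).
    assert (Hs1 : sn (- ellK (kp kk)) (kp kk) ^ 2 = 1) by (rewrite sn_mK by auto; ring).
    destruct (vals_c1zero (- pt v kk) (- ellK (kp kk)) Hc1 Hs1) as [HD [HUV Hc]]. rewrite Hsma; lra.
    apply order_pole_pt; auto.
    + split; split; lra.
    + apply pole_cond; auto. rewrite Hc, Hsma. rewrite <- Hcp. f_equal. ring.
  - intro h. apply lat_fst in h. destruct h as [m hm].
    simpl in hm. apply (int_between m (ellK kk) (pt v kk)); auto. replace (IZR m * ellK kk) with ((2 * IZR m * ellK kk) / 2) by field. rewrite <- hm. field.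
  - intros z m Hrz Ho Hm. destruct (pole_only z m Hrz Ho Hm) as [HD Hq].
    destruct z as [x y]. simpl in HD.
    destruct (pole_iff x y HD Hq) as [HUV Hc].
    apply rect_conv in Hrz. simpl in Hrz.
    destruct (regime_pole x y cpole Hrz HD HUV Hc cpole_gt) as [_ [Hs [_ Hy]]].
    rewrite <- Hcp in Hs. replace (1 / (kk ^ 2 * (1 / (kk ^ 2 * v ^ 2)))) with (v ^ 2) in Hs
      by (field; split; lra).
    destruct Hrz as [Hx _].
    destruct (rect_sn_sq x v kk Hk2 Hx Hs) as [hx|hx]; rewrite hx; destruct Hy as [hy|hy]; rewrite hy.
    + left. apply (lat_mk _ _ _ _ _ _ 0 0); simpl; ring.
    + left. apply (lat_mk _ _ _ _ _ _ 0 (-1)); simpl; ring.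
    + right. apply (lat_mk _ _ _ _ _ _ 0 1); simpl; ring.
    + right. apply (lat_mk _ _ _ _ _ _ 0 0); simpl; ring.
Qed.

Lemma half_eq (a K : R) (m : Z) : a - - a = 2 * IZR m * K -> a = IZR m * K.
Proof. intros h. replace (IZR m * K) with ((2 * IZR m * K) / 2) by field. rewrite <- h. field. Qed.

Lemma part3 : z1 > z2 + z3 ->
   exists beta : R,
     0 < beta < ellK kk /\
     sn beta kk = sqrt ((z1 + z3) * (z1 - z2 - z3) / ((z1 - z2) * (z1 + z2 + z3))) /\
     let b : C := RtoC beta in
     order_at phi b 1 /\ order_at phi (Copp b) 1 /\
     ~ lat_eq (ellK kk) (ellK (cmod kk)) b (Copp b) /\
     (forall z m, in_rect (ellK kk) (ellK (cmod kk)) z -> order_at phi z m -> (0 < m)%Z ->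
        lat_eq (ellK kk) (ellK (cmod kk)) z b \/ lat_eq (ellK kk) (ellK (cmod kk)) z (Copp b)).
Proof.
  intros Hgt. rewrite <- cz_formula.
  assert (Hr : 0 < cz < 1) by (split; [apply cz_pos; auto| apply cz_lt1]).
  assert (Hcz0 : cz <> 0) by lra.
  destruct (sqrt_sq_facts cz Hr) as [Hv Hv2].
  set (v := sqrt cz) in *.
  pose proof Kpos as HK. pose proof Kppos as HK'.
  assert (Hsa : sn (pt v kk) kk = v) by (apply pt_sn; auto; lra).
  assert (Hsma : sn (- pt v kk) kk = - v) by (rewrite <- pt_opp by auto; apply pt_sn; auto; lra).
  pose proof (pt_range v kk Hk2 Hv) as Hra.
  exists (pt v kk). split; auto. split; auto.
  intros b. change (cmod kk) with (kp kk) in *. unfold b.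
  change (RtoC (pt v kk)) with ((pt v kk, 0) : C).
  replace (Copp (pt v kk, 0)) with ((- pt v kk, 0) : C) by (unfold Copp; simpl; f_equal; ring).
  split; [|split; [|split]].
  - destruct (vals_y0 (pt v kk)) as [HD [HUV Hc]].
    rewrite Hsa, Hv2 in Hc. destruct (zero_cond _ _ HD HUV Hc) as [Hq Hp].
    apply order_zero_pt; auto. split; split; lra.
  - destruct (vals_y0 (- pt v kk)) as [HD [HUV Hc]].
    rewrite Hsma in Hc. replace ((- v) ^ 2) with (v ^ 2) in Hc by ring. rewrite Hv2 in Hc.
    destruct (zero_cond _ _ HD HUV Hc) as [Hq Hp].
    apply order_zero_pt; auto. split; split; lra.
  - intro h. apply lat_fst in h. destruct h as [m hm]. apply half_eq in hm.
    apply (int_between m (ellK kk) (pt v kk)); auto.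
  - intros z m Hrz Ho Hm. destruct (zero_only z m Hrz Ho Hm) as [HD [Hq Hp]].
    destruct z as [x y]. simpl in HD.
    destruct (zero_iff x y HD Hq Hp) as [HUV Hc].
    apply rect_conv in Hrz. simpl in Hrz.
    destruct (regime_zpos x y cz Hrz HD HUV Hc Hr) as [_ [Hy Hs]].
    rewrite <- Hv2 in Hs. destruct Hrz as [Hx _].
    destruct (rect_sn_sq x v kk Hk2 Hx Hs) as [hx|hx]; rewrite hx, Hy.
    + left. apply (lat_mk _ _ _ _ _ _ 0 0); simpl; ring.
    + right. apply (lat_mk _ _ _ _ _ _ 0 0); simpl; ring.
Qed.

Lemma part4 : z1 < z2 + z3 ->
   exists t : R,
     0 < t < ellK (cmod kk) /\
     sn t (cmod kk) = sqrt ((z1 + z3) * (z2 + z3 - z1) /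
                     ((z2 + z3) * (z1 - z2 + z3))) /\
     let b : C := (0, t) in
     order_at phi b 1 /\ order_at phi (Copp b) 1 /\
     ~ lat_eq (ellK kk) (ellK (cmod kk)) b (Copp b) /\
     (forall z m, in_rect (ellK kk) (ellK (cmod kk)) z -> order_at phi z m -> (0 < m)%Z ->
        lat_eq (ellK kk) (ellK (cmod kk)) z b \/ lat_eq (ellK kk) (ellK (cmod kk)) z (Copp b)).
Proof.
  intros Hlt.
  pose proof (cz_neg Hlt) as Hczn.
  assert (E : (z1 + z3) * (z2 + z3 - z1) / ((z2 + z3) * (z1 - z2 + z3)) = - cz / (1 - cz)).
  { rewrite cz_formula. field. repeat split; nra. }
  rewrite E.
  assert (Hr : 0 < - cz / (1 - cz) < 1).
  { split. apply Rdiv_lt_0_compat; lra.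
    apply Rmult_lt_reg_r with (1 - cz). lra. unfold Rdiv. rewrite Rmult_assoc, Rinv_l by lra. lra. }
  destruct (sqrt_sq_facts _ Hr) as [Hv Hv2].
  set (v := sqrt (- cz / (1 - cz))) in *.
  change (cmod kk) with (kp kk) in *.
  pose proof Kpos as HK. pose proof Kppos as HK'.
  assert (Hsa : sn (pt v (kp kk)) (kp kk) = v) by (apply pt_sn; auto; lra).
  assert (Hsma : sn (- pt v (kp kk)) (kp kk) = - v) by (rewrite <- pt_opp by auto; apply pt_sn; auto; lra).
  assert (Hca : 0 < cn (pt v (kp kk)) (kp kk)) by (apply pt_cn; auto; lra).
  assert (Hcma : 0 < cn (- pt v (kp kk)) (kp kk)) by (rewrite <- pt_opp by auto; apply pt_cn; auto; lra).
  pose proof (pt_range v (kp kk) Hkp2 Hv) as Hra.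
  assert (Hval : forall y, sn y (kp kk) ^ 2 = v ^ 2 -> - (sn y (kp kk) ^ 2 / cn y (kp kk) ^ 2) = cz).
  { intros y hy. pose proof (sn_sq y (kp kk)). assert (cn y (kp kk) ^ 2 = 1 - v ^ 2) by lra.
    rewrite H0, hy, Hv2. field. lra. }
  exists (pt v (kp kk)). split; auto. split; auto.
  intros b. unfold b.
  replace (Copp (0, pt v (kp kk))) with ((0, - pt v (kp kk)) : C) by (unfold Copp; simpl; f_equal; ring).
  split; [|split; [|split]].
  - destruct (vals_x0 (pt v (kp kk))) as [HD [HUV Hc]]. lra.
    rewrite Hval in Hc by (rewrite Hsa; auto). destruct (zero_cond _ _ HD HUV Hc) as [Hq Hp].
    apply order_zero_pt; auto. split; split; lra. lra.
  - destruct (vals_x0 (- pt v (kp kk))) as [HD [HUV Hc]]. lra.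
    rewrite Hval in Hc by (rewrite Hsma; ring). destruct (zero_cond _ _ HD HUV Hc) as [Hq Hp].
    apply order_zero_pt; auto. split; split; lra. lra.
  - intro h. apply lat_snd in h. destruct h as [m hm]. apply half_eq in hm.
    apply (int_between m (ellK (kp kk)) (pt v (kp kk))); auto.
  - intros z m Hrz Ho Hm. destruct (zero_only z m Hrz Ho Hm) as [HD [Hq Hp]].
    destruct z as [x y]. simpl in HD.
    destruct (zero_iff x y HD Hq Hp) as [HUV Hc].
    apply rect_conv in Hrz. simpl in Hrz.
    destruct (regime_zneg x y cz Hrz HD HUV Hc Hczn) as [_ [Hx Hs]].
    rewrite <- Hv2 in Hs. destruct Hrz as [_ Hy].
    destruct (rect_sn_sq y v (kp kk) Hkp2 Hy Hs) as [hy|hy]; rewrite hy, Hx.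
    + left. apply (lat_mk _ _ _ _ _ _ 0 0); simpl; ring.
    + right. apply (lat_mk _ _ _ _ _ _ 0 0); simpl; ring.
Qed.

Lemma part5 : z1 = z2 + z3 ->
     order_at phi (RtoC 0) 2 /\
     (forall z m, in_rect (ellK kk) (ellK (cmod kk)) z -> order_at phi z m -> (0 < m)%Z ->
        lat_eq (ellK kk) (ellK (cmod kk)) z (RtoC 0)).
Proof.
  intros Heq. pose proof (cz_zero Heq) as Hcz.
  pose proof Kpos as HK. pose proof Kppos as HK'.
  split.
  - change (RtoC 0) with ((0, 0) : C).
    destruct (vals_y0 0) as [HD [HUV Hc]]. rewrite sn_0 in Hc by auto.
    replace (0 ^ 2) with cz in Hc by (rewrite Hcz; ring).
    destruct (zero_cond _ _ HD HUV Hc) as [Hq Hp].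
    apply order_zero2_pt; auto. split; split; lra.
  - intros z m Hrz Ho Hm. destruct (zero_only z m Hrz Ho Hm) as [HD [Hq Hp]].
    destruct z as [x y]. simpl in HD.
    destruct (zero_iff x y HD Hq Hp) as [HUV Hc]. rewrite Hcz in Hc.
    apply rect_conv in Hrz. simpl in Hrz.
    destruct (regime_z0 x y Hrz HD HUV Hc) as [_ [Hx Hy]].
    rewrite Hx, Hy. change (RtoC 0) with ((0, 0) : C). apply (lat_mk _ _ _ _ _ _ 0 0); simpl; ring.
Qed.

End MAIN.

Theorem lemma5 (z1 z2 z3 : R) (h3 : 0 < z3) (h32 : z3 < z2) (h21 : z2 < z1) :
  let k := sqrt ((z1 ^ 2 - z2 ^ 2) / (z1 ^ 2 - z3 ^ 2)) in
  let k' := cmod k in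
  let K := ellK k in
  let K' := ellK k' in
  let phi : C -> C := fun z =>
    Cminus
      (Cdiv (RtoC (2 * (z1 + z3) * (z2 + z3)))
            (Cminus (RtoC (z1 + z3))
                    (Cmult (RtoC (z1 - z2)) (Cmult (snC z k) (snC z k)))))
      (RtoC (z1 + z2 + z3)) in
  (* phi is meromorphic: it has a (finite) order at every point *)
  (forall z, in_rect K K' z -> exists m : Z, order_at phi z m) /\
  (* poles: exactly two simple poles at +-(iK' + alpha) *)
  (exists alpha : R,
     0 < alpha < K /\ sn alpha k = sqrt ((z1 - z3) / (z1 + z2)) /\
     let p : C := (alpha, K') in
     order_at phi p (-1) /\ order_at phi (Copp p) (-1) /\
     ~ lat_eq K K' p (Copp p) /\
     (forall z m, in_rect K K' z -> order_at phi z m -> (m < 0)%Z ->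
        lat_eq K K' z p \/ lat_eq K K' z (Copp p))) /\
  (* zeros, case z1 > z2 + z3: real beta *)
  (z1 > z2 + z3 ->
   exists beta : R,
     0 < beta < K /\
     sn beta k = sqrt ((z1 + z3) * (z1 - z2 - z3) /
                       ((z1 - z2) * (z1 + z2 + z3))) /\
     let b : C := RtoC beta in
     order_at phi b 1 /\ order_at phi (Copp b) 1 /\
     ~ lat_eq K K' b (Copp b) /\
     (forall z m, in_rect K K' z -> order_at phi z m -> (0 < m)%Z ->
        lat_eq K K' z b \/ lat_eq K K' z (Copp b))) /\
  (* zeros, case z1 < z2 + z3: purely imaginary beta = i*t, sn(-i beta,k') = sn(t,k') *)
  (z1 < z2 + z3 ->
   exists t : R,
     0 < t < K' /\
     sn t k' = sqrt ((z1 + z3) * (z2 + z3 - z1) /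
                     ((z2 + z3) * (z1 - z2 + z3))) /\
     let b : C := (0, t) in
     order_at phi b 1 /\ order_at phi (Copp b) 1 /\
     ~ lat_eq K K' b (Copp b) /\
     (forall z m, in_rect K K' z -> order_at phi z m -> (0 < m)%Z ->
        lat_eq K K' z b \/ lat_eq K K' z (Copp b))) /\
  (* zeros, case z1 = z2 + z3: a single double zero at beta = 0 *)
  (z1 = z2 + z3 ->
     order_at phi (RtoC 0) 2 /\
     (forall z m, in_rect K K' z -> order_at phi z m -> (0 < m)%Z ->
        lat_eq K K' z (RtoC 0))).
Proof.
  intros k k' K K' ph.
  split; [|split; [|split; [|split]]].
  - exact (part1 z1 z2 z3 h3 h32 h21).
  - exact (part2 z1 z2 z3 h3 h32 h21).
  - exact (part3 z1 z2 z3 h3 h32 h21).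
  - exact (part4 z1 z2 z3 h3 h32 h21).
  - exact (part5 z1 z2 z3 h3 h32 h21).
Qed.
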